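(* Let $\sigma_0,\sigma_\epsilon>0$, $\theta_0\in\mathbb{R}$. Let the prior be $\Theta\sim N(\theta_0,\sigma_0^2)$ and the signal $X=\Theta+\epsilon$ with $\epsilon\sim\mathrm{Cauchy}(0,\sigma_\epsilon)$ independent of $\Theta$. For $x\in\mathbb{R}$ put $x_0=(x-\theta_0)/\sigma_0$, $a=\sigma_\epsilon/\sigma_0$ and $z=(a+ix_0)/\sqrt2$. Then the posterior mean $\theta_1=\mathbb{E}[\Theta\mid X=x]$ equals $$\theta_1=x+\sigma_\epsilon\,\frac{\operatorname{Im}\{\operatorname{erfcx}(z)\}}{\operatorname{Re}\{\operatorname{erfcx}(z)\}},$$ where $\operatorname{erfcx}(z)=e^{z^2}\bigl(1-\frac{2}{\sqrt\pi}\int_0^z e^{-t^2}\,dt\bigr)$.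
   Context: $\mathrm{Cauchy}(\mu,s)$ has density $t\mapsto\frac{1}{\pi s[1+((t-\mu)/s)^2]}$. The posterior mean is $\theta_1=\frac{\int\theta f_\Theta(\theta)l_\epsilon(x-\theta)d\theta}{\int f_\Theta(\theta)l_\epsilon(x-\theta)d\theta}$ with $f_\Theta$ the prior density and $l_\epsilon$ the noise density; the integral in erfcx is along any path (the integrand is entire). *)

(* Defs.v *)
From Stdlib Require Import Reals.
From Coquelicot Require Import Coquelicot.
Open Scope R_scope.

Definition normal_pdf (mu s t : R) : R :=
  / (s * sqrt (2 * PI)) * exp (- (t - mu) ^ 2 / (2 * s ^ 2)).

Definition cauchy_pdf (mu s t : R) : R :=
  / (PI * s * (1 + ((t - mu) / s) ^ 2)).

Definition posterior_mean (fTheta leps : R -> R) (x : R) : R :=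
  RInt_gen (fun th => th * fTheta th * leps (x - th))
           (Rbar_locally m_infty) (Rbar_locally p_infty)
  / RInt_gen (fun th => fTheta th * leps (x - th))
           (Rbar_locally m_infty) (Rbar_locally p_infty).

Definition cexp (z : C) : C := (exp (Re z) * cos (Im z), exp (Re z) * sin (Im z)).

(* Complex integral int_0^z e^{-t^2} dt along the straight segment t = s z, s in [0,1]
   (the integrand is entire, so any path gives the same value). *)
Definition int0_exp_msq (z : C) : C :=
  Cmult z (RInt (V := C_R_CompleteNormedModule)
                (fun s : R => cexp (Copp (Cmult (RtoC s * z) (RtoC s * z)))) 0 1).

Definition erfcx (z : C) : C :=
  Cmult (cexp (Cmult z z)) (Cminus 1 (Cmult (RtoC (2 / sqrt PI)) (int0_exp_msq z))).

(* Main.v *)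
Require Import Defs.
From Stdlib Require Import Reals Lra.
From Coquelicot Require Import Coquelicot.
Open Scope R_scope.


Lemma RInt_correctR (f : R -> R) a b : ex_RInt f a b -> is_RInt f a b (RInt f a b).
Proof. intros H. exact (RInt_correct (V := R_CompleteNormedModule) f a b H). Qed.

Lemma RInt_plusR (f g : R -> R) a b : ex_RInt f a b -> ex_RInt g a b ->
  RInt (fun x => f x + g x) a b = RInt f a b + RInt g a b.
Proof. intros Hf Hg. apply is_RInt_unique.
  exact (is_RInt_plus f g a b _ _ (RInt_correct f a b Hf) (RInt_correct g a b Hg)). Qed.

Lemma RInt_scalR (f : R -> R) k a b : ex_RInt f a b ->
  RInt (fun x => k * f x) a b = k * RInt f a b.
Proof. intros Hf. apply is_RInt_unique.
  exact (is_RInt_scal f a b k _ (RInt_correct f a b Hf)). Qed.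

Lemma RInt_minusR (f g : R -> R) a b : ex_RInt f a b -> ex_RInt g a b ->
  RInt (fun x => f x - g x) a b = RInt f a b - RInt g a b.
Proof. intros Hf Hg. apply is_RInt_unique.
  exact (is_RInt_minus f g a b _ _ (RInt_correct f a b Hf) (RInt_correct g a b Hg)). Qed.

Lemma RInt_ChaslesR (f : R -> R) a b c : ex_RInt f a b -> ex_RInt f b c ->
  RInt f a b + RInt f b c = RInt f a c.
Proof. intros H1 H2. exact (RInt_Chasles f a b c H1 H2). Qed.

Lemma RInt_swapR (f : R -> R) a b : ex_RInt f a b -> RInt f b a = - RInt f a b.
Proof. intros H. rewrite <- (opp_RInt_swap f a b H). reflexivity. Qed.

Lemma RInt_abs_le (f g : R -> R) a b : (forall x, Rabs (f x) <= g x) ->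
  ex_RInt f a b -> ex_RInt g a b -> Rabs (RInt f a b) <= Rabs (RInt g a b).
Proof.
  intros Hfg Hf Hg.
  assert (K : forall a b, a <= b -> ex_RInt f a b -> ex_RInt g a b ->
     Rabs (RInt f a b) <= Rabs (RInt g a b)).
  { clear a b Hf Hg. intros a b Hab Hf Hg.
    assert (H1 : Rabs (RInt f a b) <= RInt g a b).
    { exact (norm_RInt_le f g a b _ _ Hab (fun x _ => Hfg x) (RInt_correct f a b Hf) (RInt_correct g a b Hg)). }
    eapply Rle_trans; [exact H1| apply Rle_abs]. }
  destruct (Rle_dec a b) as [Hab|Hab]. apply K; auto.
  rewrite (RInt_swapR f b a (ex_RInt_swap f a b Hf)), (RInt_swapR g b a (ex_RInt_swap g a b Hg)), !Rabs_Ropp.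
  apply K; try lra; apply ex_RInt_swap; auto.
Qed.

Definition II (f : R -> R) (l : R) : Prop :=
  (forall a b, ex_RInt f a b) /\
  (forall eps, 0 < eps -> exists M, forall a b, a < -M -> M < b ->
     Rabs (RInt f a b - l) < eps).

Lemma II_unique f l1 l2 : II f l1 -> II f l2 -> l1 = l2.
Proof.
  intros [Hf H1] [_ H2].
  apply Rminus_diag_uniq; apply Rabs_eq_0.
  destruct (Rle_lt_or_eq_dec 0 (Rabs (l1 - l2)) (Rabs_pos _)) as [Hp|Hp]; [|auto].
  exfalso. set (e := Rabs (l1 - l2) / 2).
  destruct (H1 e) as [M1 HM1]. unfold e; lra.
  destruct (H2 e) as [M2 HM2]. unfold e; lra.
  set (M := Rabs M1 + Rabs M2 + 1).
  assert (A1 := HM1 (-M) M). assert (A2 := HM2 (-M) M).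
  assert (B1 : Rabs (RInt f (-M) M - l1) < e).
  { apply A1; unfold M; pose proof (Rle_abs M1); pose proof (Rle_abs M2);
    pose proof (Rabs_pos M1); pose proof (Rabs_pos M2);
    pose proof (Rle_abs (-M1)); rewrite Rabs_Ropp in *; lra. }
  assert (B2 : Rabs (RInt f (-M) M - l2) < e).
  { apply A2; unfold M; pose proof (Rle_abs M1); pose proof (Rle_abs M2);
    pose proof (Rabs_pos M1); pose proof (Rabs_pos M2);
    pose proof (Rle_abs (-M2)); rewrite Rabs_Ropp in *; lra. }
  assert (Rabs (l1 - l2) <= Rabs (RInt f (-M) M - l2) + Rabs (RInt f (-M) M - l1)).
  { replace (l1 - l2) with ((RInt f (-M) M - l2) - (RInt f (-M) M - l1)) by ring.
    eapply Rle_trans; [apply Rabs_triang|]. rewrite Rabs_Ropp; lra. }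
  unfold e in *; lra.
Qed.

Lemma II_ext f g l : (forall u, f u = g u) -> II f l -> II g l.
Proof.
  intros Hfg [Hf H]. split.
  intros a b; apply (ex_RInt_ext f g); auto.
  intros eps He; destruct (H eps He) as [M HM]; exists M; intros a b Ha Hb.
  rewrite <- (RInt_ext f g); auto.
Qed.

Lemma II_plus f g lf lg : II f lf -> II g lg -> II (fun u => f u + g u) (lf + lg).
Proof.
  intros [Hf H1] [Hg H2]. split.
  intros a b. eapply (ex_RInt_plus f g); auto.
  intros eps He. destruct (H1 (eps/2)) as [M1 HM1]; [lra|].
  destruct (H2 (eps/2)) as [M2 HM2]; [lra|].
  exists (Rmax M1 M2); intros a b Ha Hb.
  rewrite RInt_plusR; auto.
  assert (A := HM1 a b ltac:(pose proof (Rmax_l M1 M2); lra) ltac:(pose proof (Rmax_l M1 M2); lra)).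
  assert (B := HM2 a b ltac:(pose proof (Rmax_r M1 M2); lra) ltac:(pose proof (Rmax_r M1 M2); lra)).
  replace (RInt f a b + RInt g a b - (lf + lg)) with ((RInt f a b - lf) + (RInt g a b - lg)) by ring.
  eapply Rle_lt_trans; [apply Rabs_triang|]. lra.
Qed.

Lemma II_scal f k l : II f l -> II (fun u => k * f u) (k * l).
Proof.
  intros [Hf H]. split.
  intros a b. eapply (ex_RInt_scal f); auto.
  intros eps He. destruct (H (eps / (Rabs k + 1))) as [M HM].
  { apply Rdiv_lt_0_compat; auto. pose proof (Rabs_pos k); lra. }
  exists M; intros a b Ha Hb. rewrite RInt_scalR; auto.
  replace (k * RInt f a b - k * l) with (k * (RInt f a b - l)) by ring.
  rewrite Rabs_mult. assert (A := HM a b Ha Hb).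
  pose proof (Rabs_pos k). pose proof (Rabs_pos (RInt f a b - l)).
  apply Rle_lt_trans with ((Rabs k + 1) * Rabs (RInt f a b - l)). nra.
  apply Rmult_lt_reg_r with (/ (Rabs k + 1)).
  apply Rinv_0_lt_compat; lra.
  replace ((Rabs k + 1) * Rabs (RInt f a b - l) * / (Rabs k + 1)) with (Rabs (RInt f a b - l)) by (field; lra).
  exact A.
Qed.

Lemma II_opp f l : II f l -> II (fun u => - f u) (- l).
Proof. intros H. apply (II_ext (fun u => -1 * f u)). intros; ring.
  replace (-l) with (-1 * l) by ring. apply II_scal; auto. Qed.

Lemma II_minus f g lf lg : II f lf -> II g lg -> II (fun u => f u - g u) (lf - lg).
Proof. intros H1 H2. apply (II_ext (fun u => f u + - g u)). intros; ring.
  apply II_plus; auto. apply II_opp; auto. Qed.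

Lemma II_le f g lf lg : (forall u, f u <= g u) -> II f lf -> II g lg -> lf <= lg.
Proof.
  intros Hfg [Hf H1] [Hg H2].
  apply Rnot_lt_le; intros Hlt. set (e := (lf - lg) / 2).
  destruct (H1 e) as [M1 HM1]. unfold e; lra.
  destruct (H2 e) as [M2 HM2]. unfold e; lra.
  set (M := Rabs M1 + Rabs M2 + 1).
  pose proof (Rle_abs M1); pose proof (Rle_abs M2);
  pose proof (Rabs_pos M1); pose proof (Rabs_pos M2);
  pose proof (Rle_abs (-M1)); pose proof (Rle_abs (-M2)); rewrite !Rabs_Ropp in *.
  assert (A := HM1 (-M) M ltac:(unfold M; lra) ltac:(unfold M; lra)).
  assert (B := HM2 (-M) M ltac:(unfold M; lra) ltac:(unfold M; lra)).
  assert (C : RInt f (-M) M <= RInt g (-M) M).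
  { apply RInt_le; auto. unfold M; lra. }
  apply Rabs_def2 in A. apply Rabs_def2 in B. unfold e in *; lra.
Qed.

Lemma II_abs_le f g lf lg : (forall u, Rabs (f u) <= g u) -> II f lf -> II g lg ->
  Rabs lf <= lg.
Proof.
  intros H Hf Hg. apply Rabs_le; split.
  - assert (- lg <= lf); [|lra].
    apply (II_le (fun u => - g u) f); auto.
    intros u; specialize (H u); apply Rabs_le_between in H; lra.
    apply II_opp; auto.
  - apply (II_le f g); auto. intros u; specialize (H u).
    eapply Rle_trans; [apply Rle_abs|exact H].
Qed.


Lemma cont_of_ex_derive (f : R -> R) x : ex_derive f x -> continuous f x.
Proof. intros H. exact (ex_derive_continuous (K := R_AbsRing) (V := R_NormedModule) f x H). Qed.

Lemma ball_R (x y e : R) : ball x e y <-> Rabs (y - x) < e.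
Proof. reflexivity. Qed.

Lemma II_exists f g lg : (forall a b, ex_RInt f a b) -> (forall u, Rabs (f u) <= g u) ->
  II g lg -> exists l, II f l.
Proof.
  intros Hex Hfg [Hg H].
  assert (HF : ProperFilter (filter_prod (Rbar_locally m_infty) (Rbar_locally p_infty))).
  { apply filter_prod_proper; apply Rbar_locally_filter. }
  destruct (proj1 (filterlim_locally_cauchy (F := filter_prod (Rbar_locally m_infty) (Rbar_locally p_infty))
     (fun ab : R * R => RInt f (fst ab) (snd ab)))) as [y Hy].
  - intros eps. destruct (H (eps / 4)) as [M HM]. destruct eps as [eps He]; simpl; lra.
    set (P := fun ab : R * R => fst ab < - Rabs M - 1 /\ Rabs M + 1 < snd ab).
    exists P. split.
    + apply (Filter_prod _ _ _ (fun a => a < - Rabs M - 1) (fun b => Rabs M + 1 < b)).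
      exists (- Rabs M - 1); auto. exists (Rabs M + 1); auto.
      intros x z Hx Hz; split; auto.
    + intros [a b] [a' b'] [Ha Hb] [Ha' Hb']; simpl in *.
      apply ball_R.
      pose proof (Rle_abs M); pose proof (Rle_abs (-M)); rewrite Rabs_Ropp in *.
      assert (A1 := HM a b ltac:(lra) ltac:(lra)).
      assert (A2 := HM a' b ltac:(lra) ltac:(lra)).
      assert (A3 := HM a' b' ltac:(lra) ltac:(lra)).
      assert (Ga : Rabs (RInt g a a') < eps / 2).
      { rewrite <- (RInt_ChaslesR g a a' b) in A1 by auto.
        replace (RInt g a a') with ((RInt g a a' + RInt g a' b - lg) - (RInt g a' b - lg)) by ring.
        eapply Rle_lt_trans; [apply Rabs_triang|]. rewrite Rabs_Ropp. lra. }
      assert (Gb : Rabs (RInt g b' b) < eps / 2).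
      { rewrite <- (RInt_ChaslesR g a' b' b) in A2 by auto.
        replace (RInt g b' b) with ((RInt g a' b' + RInt g b' b - lg) - (RInt g a' b' - lg)) by ring.
        eapply Rle_lt_trans; [apply Rabs_triang|]. rewrite Rabs_Ropp. lra. }
      assert (Fa := RInt_abs_le f g a a' Hfg (Hex _ _) (Hg _ _)).
      assert (Fb := RInt_abs_le f g b' b Hfg (Hex _ _) (Hg _ _)).
      rewrite Rabs_minus_sym.
      rewrite <- (RInt_ChaslesR f a a' b) by auto.
      rewrite <- (RInt_ChaslesR f a' b' b) by auto.
      replace (RInt f a a' + (RInt f a' b' + RInt f b' b) - RInt f a' b')
        with (RInt f a a' + RInt f b' b) by ring.
      eapply Rle_lt_trans; [apply Rabs_triang|]. destruct eps; simpl in *; lra.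
  - exists y. split; auto.
    intros eps He.
    assert (K := proj1 (filterlim_locally _ y) Hy (mkposreal eps He)).
    destruct K as [Q R0 [M1 HQ] [M2 HR] HQR].
    exists (Rabs M1 + Rabs M2). intros a b Ha Hb.
    pose proof (Rle_abs M1); pose proof (Rle_abs (-M1)); rewrite Rabs_Ropp in *.
    pose proof (Rle_abs M2); pose proof (Rabs_pos M1); pose proof (Rabs_pos M2).
    apply (HQR a b); [apply HQ | apply HR]; lra.
Qed.

Lemma II_RInt_gen f l : II f l ->
  RInt_gen f (Rbar_locally m_infty) (Rbar_locally p_infty) = l.
Proof.
  intros [Hex H]. apply is_RInt_gen_unique.
  intros P [eps HP].
  destruct (H eps (cond_pos eps)) as [M HM].
  apply (Filter_prod _ _ _ (fun a => a < - M) (fun b => M < b)).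
  exists (-M); auto. exists M; auto.
  intros a b Ha Hb. exists (RInt f a b). split.
  apply RInt_correctR; auto. apply HP. apply ball_R. simpl. apply HM; auto.
Qed.

Lemma II_affine f l al be : 0 < be -> II f l -> II (fun t => be * f (al + be * t)) l.
Proof.
  intros Hb [Hex H].
  assert (E : forall a b, is_RInt (fun t => be * f (al + be * t)) a b (RInt f (be * a + al) (be * b + al))).
  { intros a b. eapply is_RInt_ext; [|apply (is_RInt_comp_lin f be al a b); apply RInt_correctR; auto].
    intros x _. simpl. rewrite (Rplus_comm al). reflexivity. }
  split. intros a b; eexists; apply E.
  intros eps He. destruct (H eps He) as [M HM].
  exists ((Rabs M + Rabs al) / be). intros a b Ha Hb'.
  rewrite (is_RInt_unique _ a b _ (E a b)).
  pose proof (Rle_abs M); pose proof (Rle_abs (-M)); rewrite Rabs_Ropp in *.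
  pose proof (Rle_abs al); pose proof (Rle_abs (-al)); rewrite Rabs_Ropp in *.
  apply HM.
  - assert (be * a < - (Rabs M + Rabs al)).
    { replace (- (Rabs M + Rabs al)) with (be * (- ((Rabs M + Rabs al) / be))) by (field; lra).
      apply Rmult_lt_compat_l; auto. }
    lra.
  - assert (Rabs M + Rabs al < be * b).
    { replace (Rabs M + Rabs al) with (be * ((Rabs M + Rabs al) / be)) by (field; lra).
      apply Rmult_lt_compat_l; auto. }
    lra.
Qed.

Lemma RInt_refl (f : R -> R) al a b : ex_RInt f (al - a) (al - b) ->
  ex_RInt (fun t => f (al - t)) a b /\ RInt (fun t => f (al - t)) a b = RInt f (al - b) (al - a).
Proof.
  intros Hf.
  assert (K : is_RInt (fun t => -1 * f (al - t)) a b (RInt f (al - a) (al - b))).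
  { eapply is_RInt_ext; [|apply (is_RInt_comp_lin f (-1) al a b)].
    intros x _. simpl. replace (-1 * x + al) with (al - x) by ring. reflexivity.
    replace (-1 * a + al) with (al - a) by ring. replace (-1 * b + al) with (al - b) by ring.
    apply RInt_correctR; auto. }
  assert (Ex1 : ex_RInt (fun t => -1 * f (al - t)) a b) by (eexists; exact K).
  assert (Ex2 : ex_RInt (fun t => f (al - t)) a b).
  { refine (ex_RInt_ext (fun t => -1 * (-1 * f (al - t))) _ a b _ _).
    intros x _. simpl. ring.
    apply (ex_RInt_scal (V := R_NormedModule)); auto. }
  split; auto.
  rewrite (RInt_ext _ (fun t => -1 * (-1 * f (al - t)))) by (intros; simpl; ring).
  rewrite RInt_scalR by auto. rewrite (is_RInt_unique _ _ _ _ K).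
  rewrite (RInt_swapR f (al - b) (al - a)). simpl; ring. apply ex_RInt_swap; auto.
Qed.

Lemma II_refl f l al : II f l -> II (fun t => f (al - t)) l.
Proof.
  intros [Hex H]. split.
  intros a b; apply (RInt_refl f al a b); auto.
  intros eps He. destruct (H eps He) as [M HM].
  exists (Rabs M + Rabs al). intros a b Ha Hb.
  rewrite (proj2 (RInt_refl f al a b (Hex _ _))).
  pose proof (Rle_abs M); pose proof (Rle_abs (-M)); rewrite Rabs_Ropp in *.
  pose proof (Rle_abs al); pose proof (Rle_abs (-al)); rewrite Rabs_Ropp in *.
  apply HM; lra.
Qed.

Lemma II_deriv0 (g g' : R -> R) : (forall u, is_derive g u (g' u)) ->
  (forall u, continuous g' u) ->
  (forall eps, 0 < eps -> exists M, forall u, M < Rabs u -> Rabs (g u) < eps) ->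
  II g' 0.
Proof.
  intros Hd Hc Hlim.
  assert (E : forall a b, is_RInt g' a b (g b - g a)).
  { intros a b. exact (is_RInt_derive (V := R_CompleteNormedModule) g g' a b (fun x _ => Hd x) (fun x _ => Hc x)). }
  split. intros a b; eexists; apply E.
  intros eps He. destruct (Hlim (eps/2)) as [M HM]; [lra|].
  exists (Rabs M). intros a b Ha Hb.
  rewrite (is_RInt_unique _ _ _ _ (E a b)).
  pose proof (Rle_abs M); pose proof (Rabs_pos M).
  assert (A := HM a ltac:(rewrite Rabs_left; lra)).
  assert (B := HM b ltac:(rewrite Rabs_right; lra)).
  replace (g b - g a - 0) with (g b + - g a) by ring.
  eapply Rle_lt_trans; [apply Rabs_triang|]. rewrite Rabs_Ropp; lra.
Qed.

Lemma atan_lim_p eps : 0 < eps -> exists M, forall x, M < x -> PI / 2 - atan x < eps.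
Proof.
  intros He. set (e := Rmin eps 1).
  assert (He1 : 0 < e) by (unfold e; apply Rmin_glb_lt; lra).
  assert (He2 : e <= 1) by apply Rmin_r.
  assert (He3 : e <= eps) by apply Rmin_l.
  pose proof PI2_3_2.
  exists (tan (PI / 2 - e)). intros x Hx.
  apply atan_increasing in Hx. rewrite atan_tan in Hx by lra. lra.
Qed.

Lemma atan_opp' x : atan (- x) = - atan x.
Proof. apply atan_opp. Qed.

Lemma is_derive_atan_lin (c e u : R) : 0 < e ->
  is_derive (fun v => atan ((v - c) / e)) u (e / (e ^ 2 + (u - c) ^ 2)).
Proof.
  intros He.
  assert (H1 : is_derive (fun v => (v - c) / e) u (/ e)).
  { auto_derive. auto. field. lra. }
  assert (H2 : is_derive atan ((u - c) / e) (/ (1 + ((u - c) / e) ^ 2))).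
  { apply is_derive_Reals. apply derivable_pt_lim_atan. }
  assert (H3 := is_derive_comp atan (fun v => (v - c) / e) u _ _ H2 H1).
  replace (e / (e ^ 2 + (u - c) ^ 2)) with (scal (/ e) (/ (1 + ((u - c) / e) ^ 2))).
  exact H3.
  unfold scal; simpl; unfold mult; simpl.
  assert (0 < e ^ 2 + (u - c) ^ 2) by (pose proof (pow2_ge_0 (u - c)); nra).
  field. split; lra.
Qed.

Lemma II_kernel (e c : R) : 0 < e -> II (fun u => e / (e ^ 2 + (u - c) ^ 2)) PI.
Proof.
  intros He.
  assert (Hc : forall u, continuous (fun u => e / (e ^ 2 + (u - c) ^ 2)) u).
  { intros u. apply cont_of_ex_derive. auto_derive.
    pose proof (pow2_ge_0 (u - c)). nra. }
  assert (E := II_deriv0).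
  assert (Ex : forall a b, is_RInt (fun u => e / (e ^ 2 + (u - c) ^ 2)) a b
       (atan ((b - c) / e) - atan ((a - c) / e))).
  { intros a b. exact (is_RInt_derive (V := R_CompleteNormedModule) (fun v => atan ((v - c) / e)) _ a b
      (fun x _ => is_derive_atan_lin c e x He) (fun x _ => Hc x)). }
  split. intros a b; eexists; apply Ex.
  intros eps Heps. destruct (atan_lim_p (eps / 2)) as [M HM]; [lra|].
  exists (Rabs M * e + Rabs c). intros a b Ha Hb.
  rewrite (is_RInt_unique _ _ _ _ (Ex a b)).
  pose proof (Rle_abs M); pose proof (Rle_abs (-M)); rewrite Rabs_Ropp in *.
  pose proof (Rle_abs c); pose proof (Rle_abs (-c)); rewrite Rabs_Ropp in *.
  pose proof (Rabs_pos M).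
  assert (A := HM ((b - c) / e)).
  assert (B := HM (- ((a - c) / e))).
  rewrite atan_opp' in B.
  assert (M < (b - c) / e).
  { apply Rmult_lt_reg_r with e; auto. unfold Rdiv; rewrite Rmult_assoc, Rinv_l, Rmult_1_r by lra. nra. }
  assert (M < - ((a - c) / e)).
  { apply Rmult_lt_reg_r with e; auto. unfold Rdiv; rewrite Ropp_mult_distr_l, Rmult_assoc, Rinv_l, Rmult_1_r by lra. nra. }
  specialize (A ltac:(auto)). specialize (B ltac:(auto)).
  pose proof (atan_bound ((b - c) / e)). pose proof (atan_bound ((a - c) / e)).
  apply Rabs_def1; lra.
Qed.


Definition gau (u : R) : R := exp (- u ^ 2).

Lemma gau_pos u : 0 < gau u.
Proof. apply exp_pos. Qed.

Lemma gau_le u : gau u <= 1 / (1 ^ 2 + (u - 0) ^ 2).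
Proof.
  unfold gau. pose proof (exp_ineq1_le (u ^ 2)).
  assert (exp (- u ^ 2) * exp (u ^ 2) = 1) by (rewrite <- exp_plus; replace (- u^2 + u^2) with 0 by ring; apply exp_0).
  pose proof (exp_pos (- u ^ 2)). pose proof (pow2_ge_0 u).
  replace (1 / (1 ^ 2 + (u - 0) ^ 2)) with (/ (1 + u ^ 2)) by (field; lra).
  apply Rmult_le_reg_r with (1 + u ^ 2). lra.
  rewrite Rinv_l by lra. nra.
Qed.

Lemma gau_cont u : continuous gau u.
Proof. apply cont_of_ex_derive. unfold gau. auto_derive. auto. Qed.

Lemma ex_RInt_contR (f : R -> R) a b : (forall x, continuous f x) -> ex_RInt f a b.
Proof. intros H. exact (ex_RInt_continuous (V := R_CompleteNormedModule) f a b (fun x _ => H x)). Qed.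

Lemma gau_ex a b : ex_RInt gau a b.
Proof. apply ex_RInt_contR. intros; apply gau_cont. Qed.

Lemma gau_II : exists G, II gau G.
Proof.
  apply (II_exists gau (fun u => 1 / (1 ^ 2 + (u - 0) ^ 2)) PI).
  apply gau_ex. intros u; rewrite Rabs_pos_eq; [apply gau_le | left; apply gau_pos].
  apply II_kernel; lra.
Qed.

Definition Gc : R := RInt_gen gau (Rbar_locally m_infty) (Rbar_locally p_infty).

Lemma Gc_II : II gau Gc.
Proof. destruct gau_II as [G HG]. unfold Gc. rewrite (II_RInt_gen _ _ HG). auto. Qed.

Lemma gau_decay C eps : 0 < eps -> exists M, forall u, M < Rabs u -> Rabs C * gau u < eps.
Proof.
  intros He. exists (Rabs C / eps + 1). intros u Hu.
  pose proof (gau_le u). pose proof (gau_pos u). pose proof (Rabs_pos C).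
  pose proof (pow2_ge_0 u).
  assert (Hq : 0 <= Rabs C / eps) by (apply Rdiv_le_0_compat; lra).
  assert (Hu2 : Rabs u <= u ^ 2).
  { assert (Rabs u * Rabs u = u ^ 2) by (rewrite <- Rabs_mult; simpl; rewrite Rmult_1_r; apply Rabs_pos_eq; nra). nra. }
  assert (HC : Rabs C < eps * (1 + u ^ 2)).
  { assert (Rabs C = eps * (Rabs C / eps)) by (field; lra). nra. }
  replace (1 / (1 ^ 2 + (u - 0) ^ 2)) with (/ (1 + u ^ 2)) in H by (field; lra).
  apply Rle_lt_trans with (Rabs C * / (1 + u ^ 2)).
  apply Rmult_le_compat_l; auto.
  apply Rmult_lt_reg_r with (1 + u ^ 2). lra.
  rewrite Rmult_assoc, Rinv_l by lra. lra.
Qed.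


Definition Dn (p q t u : R) := (t * p) ^ 2 + (u - t * q) ^ 2.
Definition f1 (p q t u : R) := gau u * (t * p) / Dn p q t u.
Definition f2 (p q t u : R) := gau u * (u - t * q) / Dn p q t u.
Definition d1 (p q t u : R) :=
  - gau u * (p * ((t * p) ^ 2 - (u - t * q) ^ 2) - 2 * q * (t * p) * (u - t * q)) / (Dn p q t u) ^ 2.
Definition d2 (p q t u : R) :=
  - gau u * (q * ((t * p) ^ 2 - (u - t * q) ^ 2) + 2 * p * (t * p) * (u - t * q)) / (Dn p q t u) ^ 2.
Definition g1 (p q t u : R) := - gau u * (q * (t * p) + p * (u - t * q)) / Dn p q t u.
Definition g2 (p q t u : R) := gau u * (p * (t * p) - q * (u - t * q)) / Dn p q t u.
Definition g1d (p q t u : R) :=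
  - ((-2 * u * gau u) * (q * (t * p) + p * (u - t * q)) * Dn p q t u
     + gau u * p * Dn p q t u - gau u * (q * (t * p) + p * (u - t * q)) * (2 * (u - t * q)))
   / (Dn p q t u) ^ 2.
Definition g2d (p q t u : R) :=
  ((-2 * u * gau u) * (p * (t * p) - q * (u - t * q)) * Dn p q t u
     + gau u * (- q) * Dn p q t u - gau u * (p * (t * p) - q * (u - t * q)) * (2 * (u - t * q)))
   / (Dn p q t u) ^ 2.

Lemma Dn_pos p q t u : 0 < p -> 0 < t -> 0 < Dn p q t u.
Proof. intros Hp Ht. unfold Dn. pose proof (pow2_ge_0 (u - t*q)).
  assert (0 < t * p) by nra. nra. Qed.

Lemma Dn_ge p q t u : 0 < p -> 0 < t -> (t * p) ^ 2 <= Dn p q t u.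
Proof. intros. unfold Dn. pose proof (pow2_ge_0 (u - t*q)). lra. Qed.

Ltac dn_facts p q t u Hp Ht :=
  pose proof (Dn_pos p q t u Hp Ht); pose proof (Dn_ge p q t u Hp Ht);
  pose proof (gau_pos u).

Lemma g1_deriv p q t u : 0 < p -> 0 < t -> is_derive (g1 p q t) u (g1d p q t u).
Proof.
  intros Hp Ht. dn_facts p q t u Hp Ht. unfold g1, g1d, gau in *. unfold Dn in *.
  auto_derive. lra. replace (exp (- (u * (u * 1)))) with (exp (- u ^ 2)) by (f_equal; ring). field. lra.
Qed.

Lemma g2_deriv p q t u : 0 < p -> 0 < t -> is_derive (g2 p q t) u (g2d p q t u).
Proof.
  intros Hp Ht. dn_facts p q t u Hp Ht. unfold g2, g2d, gau in *. unfold Dn in *.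
  auto_derive. lra. replace (exp (- (u * (u * 1)))) with (exp (- u ^ 2)) by (f_equal; ring). field. lra.
Qed.

Lemma d1_id p q t u : 0 < p -> 0 < t ->
  d1 p q t u = 2 * t * ((p^2 - q^2) * f1 p q t u - 2 * p * q * f2 p q t u) - 2 * p * gau u + g1d p q t u.
Proof. intros Hp Ht. dn_facts p q t u Hp Ht. unfold d1, f1, f2, g1d, Dn in *. field. lra. Qed.

Lemma d2_id p q t u : 0 < p -> 0 < t ->
  d2 p q t u = 2 * t * (2 * p * q * f1 p q t u + (p^2 - q^2) * f2 p q t u) - 2 * q * gau u + g2d p q t u.
Proof. intros Hp Ht. dn_facts p q t u Hp Ht. unfold d2, f2, f1, g2d, Dn in *. field. lra. Qed.

Lemma lin_over_D X Y a b : 0 < X ->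
  Rabs (a * X + b * Y) / (X ^ 2 + Y ^ 2) <= (Rabs a + Rabs b) / X.
Proof.
  intros HX. pose proof (pow2_ge_0 Y).
  assert (HD : 0 < X ^ 2 + Y ^ 2) by nra.
  assert (H1 : Rabs (a * X + b * Y) <= Rabs a * X + Rabs b * Rabs Y).
  { eapply Rle_trans; [apply Rabs_triang|]. rewrite !Rabs_mult, (Rabs_pos_eq X) by lra. lra. }
  assert (H2 : X * Rabs Y <= X ^ 2 + Y ^ 2).
  { assert (Rabs Y * Rabs Y = Y ^ 2) by (rewrite <- Rabs_mult; simpl; rewrite Rmult_1_r; apply Rabs_pos_eq; nra).
    pose proof (Rabs_pos Y). nra. }
  pose proof (Rabs_pos a); pose proof (Rabs_pos b).
  apply Rmult_le_reg_r with (X * (X ^ 2 + Y ^ 2)). nra.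
  replace (Rabs (a * X + b * Y) / (X ^ 2 + Y ^ 2) * (X * (X ^ 2 + Y ^ 2))) with (Rabs (a * X + b * Y) * X) by (field; lra).
  replace ((Rabs a + Rabs b) / X * (X * (X ^ 2 + Y ^ 2))) with ((Rabs a + Rabs b) * (X ^ 2 + Y ^ 2)) by (field; lra).
  nra.
Qed.

Lemma gau_lin_bound p q t u a b : 0 < p -> 0 < t ->
  Rabs (gau u * (a * (t * p) + b * (u - t * q)) / Dn p q t u) <= (Rabs a + Rabs b) / (t * p) * gau u.
Proof.
  intros Hp Ht. dn_facts p q t u Hp Ht.
  assert (0 < t * p) by nra.
  pose proof (lin_over_D (t * p) (u - t * q) a b ltac:(lra)).
  unfold Rdiv in *. rewrite Rabs_mult, Rabs_mult, (Rabs_pos_eq (gau u)), (Rabs_pos_eq (/ Dn p q t u)) by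
    (try apply Rlt_le, Rinv_0_lt_compat; lra).
  unfold Dn in *.
  replace (gau u * Rabs (a * (t * p) + b * (u - t * q)) * / ((t * p) ^ 2 + (u - t * q) ^ 2))
    with (gau u * (Rabs (a * (t * p) + b * (u - t * q)) * / ((t * p) ^ 2 + (u - t * q) ^ 2))) by ring.
  rewrite (Rmult_comm _ (gau u)). apply Rmult_le_compat_l; lra.
Qed.

Lemma f1_bound p q t u : 0 < p -> 0 < t -> Rabs (f1 p q t u) <= / (t * p) * gau u.
Proof. intros Hp Ht. assert (K := gau_lin_bound p q t u 1 0 Hp Ht).
  unfold f1. replace (gau u * (t * p)) with (gau u * (1 * (t * p) + 0 * (u - t * q))) by ring.
  rewrite Rabs_R1, Rabs_R0 in K. replace (/ (t * p)) with ((1 + 0) / (t * p)) by (field; nra). exact K. Qed.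

Lemma f2_bound p q t u : 0 < p -> 0 < t -> Rabs (f2 p q t u) <= / (t * p) * gau u.
Proof. intros Hp Ht. assert (K := gau_lin_bound p q t u 0 1 Hp Ht).
  unfold f2. replace (gau u * (u - t * q)) with (gau u * (0 * (t * p) + 1 * (u - t * q))) by ring.
  rewrite Rabs_R1, Rabs_R0 in K. replace (/ (t * p)) with ((0 + 1) / (t * p)) by (field; nra). exact K. Qed.

Lemma g1_bound p q t u : 0 < p -> 0 < t -> Rabs (g1 p q t u) <= (Rabs q + Rabs p) / (t * p) * gau u.
Proof. intros Hp Ht. assert (K := gau_lin_bound p q t u q p Hp Ht).
  unfold g1. replace (- gau u * (q * (t * p) + p * (u - t * q)) / Dn p q t u) with
    (- (gau u * (q * (t * p) + p * (u - t * q)) / Dn p q t u)) by (unfold Rdiv; ring).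
  rewrite Rabs_Ropp. exact K. Qed.

Lemma g2_bound p q t u : 0 < p -> 0 < t -> Rabs (g2 p q t u) <= (Rabs p + Rabs (- q)) / (t * p) * gau u.
Proof. intros Hp Ht. assert (K := gau_lin_bound p q t u p (-q) Hp Ht).
  unfold g2. replace (p * (t * p) - q * (u - t * q)) with (p * (t * p) + - q * (u - t * q)) by ring.
  exact K. Qed.

Ltac exp_norm u := try replace (exp (- (u * (u * 1)))) with (exp (- u ^ 2)) by (f_equal; ring).

Lemma f1_cont p q t u : 0 < p -> 0 < t -> continuous (f1 p q t) u.
Proof. intros Hp Ht. apply cont_of_ex_derive. dn_facts p q t u Hp Ht. unfold f1, gau, Dn in *. auto_derive. lra. Qed.
Lemma f2_cont p q t u : 0 < p -> 0 < t -> continuous (f2 p q t) u.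
Proof. intros Hp Ht. apply cont_of_ex_derive. dn_facts p q t u Hp Ht. unfold f2, gau, Dn in *. auto_derive. lra. Qed.
Lemma g1d_cont p q t u : 0 < p -> 0 < t -> continuous (g1d p q t) u.
Proof. intros Hp Ht. apply cont_of_ex_derive. dn_facts p q t u Hp Ht. unfold g1d, gau, Dn in *. auto_derive. nra. Qed.
Lemma g2d_cont p q t u : 0 < p -> 0 < t -> continuous (g2d p q t) u.
Proof. intros Hp Ht. apply cont_of_ex_derive. dn_facts p q t u Hp Ht. unfold g2d, gau, Dn in *. auto_derive. nra. Qed.


Definition RIg (f : R -> R) : R := RInt_gen f (Rbar_locally m_infty) (Rbar_locally p_infty).
Definition F1 p q t := RIg (f1 p q t).
Definition F2 p q t := RIg (f2 p q t).

Lemma II_RIg f l : II f l -> RIg f = l.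
Proof. apply II_RInt_gen. Qed.

Lemma II_exists_RIg f g lg : (forall a b, ex_RInt f a b) -> (forall u, Rabs (f u) <= g u) ->
  II g lg -> II f (RIg f).
Proof. intros A B C. destruct (II_exists f g lg A B C) as [l Hl].
  rewrite (II_RIg _ _ Hl). exact Hl. Qed.

Lemma F1_II p q t : 0 < p -> 0 < t -> II (f1 p q t) (F1 p q t).
Proof. intros Hp Ht. apply (II_exists_RIg _ (fun u => / (t * p) * gau u) (/ (t * p) * Gc)).
  intros; apply ex_RInt_contR; intros; apply f1_cont; auto.
  intros; apply f1_bound; auto. apply II_scal, Gc_II. Qed.

Lemma F2_II p q t : 0 < p -> 0 < t -> II (f2 p q t) (F2 p q t).
Proof. intros Hp Ht. apply (II_exists_RIg _ (fun u => / (t * p) * gau u) (/ (t * p) * Gc)).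
  intros; apply ex_RInt_contR; intros; apply f2_cont; auto.
  intros; apply f2_bound; auto. apply II_scal, Gc_II. Qed.

Lemma g1d_II p q t : 0 < p -> 0 < t -> II (g1d p q t) 0.
Proof. intros Hp Ht. apply (II_deriv0 (g1 p q t)).
  intros; apply g1_deriv; auto. intros; apply g1d_cont; auto.
  intros eps He. destruct (gau_decay ((Rabs q + Rabs p) / (t * p)) eps He) as [M HM].
  exists M; intros u Hu. eapply Rle_lt_trans; [apply g1_bound; auto|].
  eapply Rle_lt_trans; [|apply (HM u Hu)]. apply Rmult_le_compat_r. left; apply gau_pos. apply Rle_abs.
Qed.

Lemma g2d_II p q t : 0 < p -> 0 < t -> II (g2d p q t) 0.
Proof. intros Hp Ht. apply (II_deriv0 (g2 p q t)).
  intros; apply g2_deriv; auto. intros; apply g2d_cont; auto.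
  intros eps He. destruct (gau_decay ((Rabs p + Rabs (- q)) / (t * p)) eps He) as [M HM].
  exists M; intros u Hu. eapply Rle_lt_trans; [apply g2_bound; auto|].
  eapply Rle_lt_trans; [|apply (HM u Hu)]. apply Rmult_le_compat_r. left; apply gau_pos. apply Rle_abs.
Qed.

Definition R1 p q t := 2 * t * ((p^2 - q^2) * F1 p q t - 2 * p * q * F2 p q t) - 2 * p * Gc.
Definition R2 p q t := 2 * t * (2 * p * q * F1 p q t + (p^2 - q^2) * F2 p q t) - 2 * q * Gc.

Lemma d1_II p q t : 0 < p -> 0 < t -> II (d1 p q t) (R1 p q t).
Proof.
  intros Hp Ht. eapply II_ext. intros u; symmetry; apply d1_id; auto.
  unfold R1. replace (2 * t * ((p ^ 2 - q ^ 2) * F1 p q t - 2 * p * q * F2 p q t) - 2 * p * Gc)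
   with (2 * t * ((p ^ 2 - q ^ 2) * F1 p q t - 2 * p * q * F2 p q t) - 2 * p * Gc + 0) by ring.
  apply II_plus; [|apply g1d_II; auto].
  apply II_minus; [|apply II_scal, Gc_II].
  apply II_scal, II_minus; apply II_scal; [apply F1_II|apply F2_II]; auto.
Qed.

Lemma d2_II p q t : 0 < p -> 0 < t -> II (d2 p q t) (R2 p q t).
Proof.
  intros Hp Ht. eapply II_ext. intros u; symmetry; apply d2_id; auto.
  unfold R2. replace (2 * t * (2 * p * q * F1 p q t + (p ^ 2 - q ^ 2) * F2 p q t) - 2 * q * Gc)
   with (2 * t * (2 * p * q * F1 p q t + (p ^ 2 - q ^ 2) * F2 p q t) - 2 * q * Gc + 0) by ring.
  apply II_plus; [|apply g2d_II; auto].
  apply II_minus; [|apply II_scal, Gc_II].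
  apply II_scal, II_plus; apply II_scal; [apply F1_II|apply F2_II]; auto.
Qed.

Lemma II_param_derive (f : R -> R -> R) (F : R -> R) (d B : R -> R) (LB Ld t del : R) :
  0 < del ->
  (forall s, Rabs (s - t) < del -> II (f s) (F s)) ->
  II d Ld -> II B LB ->
  (forall h u, Rabs h < del -> Rabs (f (t + h) u - f t u - h * d u) <= h ^ 2 * B u) ->
  is_derive F t Ld.
Proof.
  intros Hdel HF Hd HB Hb. apply is_derive_Reals.
  intros eps He.
  assert (HL : 0 < Rabs LB + 1) by (pose proof (Rabs_pos LB); lra).
  assert (Hd' : 0 < Rmin del (eps / (Rabs LB + 1))).
  { apply Rmin_glb_lt; auto. apply Rdiv_lt_0_compat; auto. }
  exists (mkposreal _ Hd'). intros h Hh0 Hh. simpl in Hh.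
  assert (Hh1 : Rabs h < del) by (pose proof (Rmin_l del (eps / (Rabs LB + 1))); lra).
  assert (Hh2 : Rabs h < eps / (Rabs LB + 1)) by (pose proof (Rmin_r del (eps / (Rabs LB + 1))); lra).
  assert (K1 : II (fun u => f (t + h) u - f t u - h * d u) (F (t + h) - F t - h * Ld)).
  { apply II_minus. apply II_minus; apply HF.
    replace (t + h - t) with h by ring; auto. replace (t - t) with 0 by ring; rewrite Rabs_R0; lra.
    apply II_scal; auto. }
  assert (K2 : Rabs (F (t + h) - F t - h * Ld) <= h ^ 2 * LB).
  { apply (II_abs_le (fun u => f (t + h) u - f t u - h * d u) (fun u => h ^ 2 * B u)); auto. apply II_scal; auto. }
  assert (Hh3 : 0 < Rabs h) by (apply Rabs_pos_lt; auto).
  replace ((F (t + h) - F t) / h - Ld) with ((F (t + h) - F t - h * Ld) / h) by (field; auto).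
  unfold Rdiv; rewrite Rabs_mult, Rabs_inv.
  apply Rle_lt_trans with (h ^ 2 * Rabs LB * / Rabs h).
  apply Rmult_le_compat_r. left; apply Rinv_0_lt_compat; auto.
  eapply Rle_trans; [exact K2|]. apply Rmult_le_compat_l. apply pow2_ge_0. apply Rle_abs.
  replace (h ^ 2) with (Rabs h * Rabs h) by (rewrite <- Rabs_mult; simpl; rewrite Rmult_1_r; apply Rabs_pos_eq; nra).
  replace (Rabs h * Rabs h * Rabs LB * / Rabs h) with (Rabs h * Rabs LB) by (field; lra).
  apply Rle_lt_trans with (Rabs h * (Rabs LB + 1)). pose proof (Rabs_pos h). nra.
  apply Rmult_lt_reg_r with (/ (Rabs LB + 1)). apply Rinv_0_lt_compat; auto.
  replace (Rabs h * (Rabs LB + 1) * / (Rabs LB + 1)) with (Rabs h) by (field; lra). exact Hh2.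
Qed.


Lemma sq_abs h : Rabs h * Rabs h = h ^ 2.
Proof. rewrite <- Rabs_mult. rewrite Rabs_pos_eq. ring. nra. Qed.

Definition zc (p q : R) : C := (p, q).
Definition Ac (p q t u : R) : C := (t * p, t * q - u).

Lemma Ac_neq0 p q t u : 0 < p -> 0 < t -> Ac p q t u <> RtoC 0.
Proof. intros Hp Ht E. injection E as E1 E2. nra. Qed.

Lemma D_alt p q t u : (t * p) ^ 2 + (t * q - u) ^ 2 = Dn p q t u.
Proof. unfold Dn. ring. Qed.

Lemma f1_C p q t u : 0 < p -> 0 < t -> f1 p q t u = fst (RtoC (gau u) / Ac p q t u)%C.
Proof. intros Hp Ht. dn_facts p q t u Hp Ht. unfold f1, Ac, Cdiv, Cinv, Cmult, RtoC; simpl.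
  unfold Dn in *. field. nra. Qed.

Lemma f2_C p q t u : 0 < p -> 0 < t -> f2 p q t u = snd (RtoC (gau u) / Ac p q t u)%C.
Proof. intros Hp Ht. dn_facts p q t u Hp Ht. unfold f2, Ac, Cdiv, Cinv, Cmult, RtoC; simpl.
  unfold Dn in *. field. nra. Qed.

Lemma d1_C p q t u : 0 < p -> 0 < t ->
  d1 p q t u = fst (- (zc p q * RtoC (gau u) / (Ac p q t u * Ac p q t u)))%C.
Proof. intros Hp Ht. dn_facts p q t u Hp Ht. unfold d1, Ac, zc, Cdiv, Cinv, Cmult, Copp, RtoC; simpl.
  assert (E : (t * p * (t * p) - (t * q - u) * (t * q - u)) ^ 2 + (t * p * (t * q - u) + (t * q - u) * (t * p)) ^ 2
     = Dn p q t u ^ 2) by (unfold Dn; ring).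
  unfold Dn in *. field. split; nra. Qed.

Lemma d2_C p q t u : 0 < p -> 0 < t ->
  d2 p q t u = snd (- (zc p q * RtoC (gau u) / (Ac p q t u * Ac p q t u)))%C.
Proof. intros Hp Ht. dn_facts p q t u Hp Ht. unfold d2, Ac, zc, Cdiv, Cinv, Cmult, Copp, RtoC; simpl.
  assert (E : (t * p * (t * p) - (t * q - u) * (t * q - u)) ^ 2 + (t * p * (t * q - u) + (t * q - u) * (t * p)) ^ 2
     = Dn p q t u ^ 2) by (unfold Dn; ring).
  unfold Dn in *. field. split; nra. Qed.

Lemma rem_C p q t h u : 0 < p -> 0 < t -> 0 < t + h ->
  (RtoC (gau u) / Ac p q (t + h) u - RtoC (gau u) / Ac p q t u
    - RtoC h * (- (zc p q * RtoC (gau u) / (Ac p q t u * Ac p q t u))))%C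
  = (RtoC (gau u) * (RtoC h * RtoC h) * (zc p q * zc p q) / (Ac p q t u * Ac p q t u * Ac p q (t + h) u))%C.
Proof.
  intros Hp Ht Hth.
  assert (E : Ac p q (t + h) u = (Ac p q t u + RtoC h * zc p q)%C).
  { unfold Ac, zc, RtoC, Cplus, Cmult; simpl. f_equal; ring. }
  pose proof (Ac_neq0 p q t u Hp Ht). pose proof (Ac_neq0 p q (t + h) u Hp Hth).
  rewrite E in *. field. split; auto.
Qed.

Definition Bc p q t u := gau u * (2 * Cmod (zc p q) ^ 2 / (t * p) ^ 3).

Lemma Cmod_Ac_ge p q t u : 0 < p -> 0 < t -> t * p <= Cmod (Ac p q t u).
Proof. intros. eapply Rle_trans; [|apply re_le_Cmod]. unfold Ac; simpl. rewrite Rabs_pos_eq; nra. Qed.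

Definition wC p q t h u := (RtoC (gau u) / Ac p q (t + h) u - RtoC (gau u) / Ac p q t u
    - RtoC h * (- (zc p q * RtoC (gau u) / (Ac p q t u * Ac p q t u))))%C.

Lemma wC_bound p q t h u : 0 < p -> 0 < t -> Rabs h < t / 2 ->
  Cmod (wC p q t h u) <= h ^ 2 * Bc p q t u.
Proof.
  intros Hp Ht Hh. assert (Hth : 0 < t + h) by (apply Rabs_def2 in Hh; lra).
  unfold wC; rewrite rem_C by auto.
  pose proof (Ac_neq0 p q t u Hp Ht). pose proof (Ac_neq0 p q (t + h) u Hp Hth).
  pose proof (Cmod_Ac_ge p q t u Hp Ht). pose proof (Cmod_Ac_ge p q (t + h) u Hp Hth).
  assert (Htp : 0 < t * p) by nra.
  assert (Hthp : t * p / 2 <= (t + h) * p).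
  { apply Rabs_def2 in Hh. nra. }
  assert (HA : (Ac p q t u * Ac p q t u * Ac p q (t + h) u)%C <> RtoC 0).
  { apply Cmod_gt_0. rewrite !Cmod_mult. apply Rmult_lt_0_compat; [apply Rmult_lt_0_compat|]; lra. }
  rewrite Cmod_div by auto. rewrite !Cmod_mult, !Cmod_R.
  rewrite (Rabs_pos_eq (gau u)) by (left; apply gau_pos).
  unfold Bc. pose proof (gau_pos u). pose proof (Cmod_ge_0 (zc p q)).
  set (a := Cmod (Ac p q t u)) in *. set (b := Cmod (Ac p q (t + h) u)) in *.
  set (m := Cmod (zc p q)) in *.
  rewrite sq_abs.
  assert (Hab : (t * p) ^ 3 / 2 <= a * a * b).
  { assert (t * p * (t * p) <= a * a) by nra. 
    replace ((t * p) ^ 3 / 2) with (t * p * (t * p) * (t * p / 2)) by field. 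
    apply Rmult_le_compat; try nra. }
  assert (0 < (t * p) ^ 3) by (apply pow_lt; auto).
  apply Rmult_le_reg_r with (a * a * b). nra.
  replace (gau u * h ^ 2 * (m * m) / (a * a * b) * (a * a * b)) with (gau u * h ^ 2 * (m * m)) by (field; nra).
  replace (h ^ 2 * (gau u * (2 * m ^ 2 / (t * p) ^ 3)) * (a * a * b))
    with ((gau u * h ^ 2 * (m * m)) * (2 * (a * a * b) / (t * p) ^ 3)) by (field; nra).
  assert (1 <= 2 * (a * a * b) / (t * p) ^ 3).
  { apply Rmult_le_reg_r with ((t * p) ^ 3). auto.
    replace (2 * (a * a * b) / (t * p) ^ 3 * (t * p) ^ 3) with (2 * (a * a * b)) by (field; lra). lra. }
  pose proof (pow2_ge_0 h). assert (0 <= gau u * h ^ 2 * (m * m)) by (apply Rmult_le_pos; nra).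
  nra.
Qed.

Lemma rem_bound1 p q t h u : 0 < p -> 0 < t -> Rabs h < t / 2 ->
  Rabs (f1 p q (t + h) u - f1 p q t u - h * d1 p q t u) <= h ^ 2 * Bc p q t u.
Proof.
  intros Hp Ht Hh. assert (Hth : 0 < t + h) by (apply Rabs_def2 in Hh; lra).
  rewrite (f1_C p q (t + h)), (f1_C p q t), (d1_C p q t) by auto.
  eapply Rle_trans; [|apply (wC_bound p q t h u); auto].
  eapply Rle_trans; [|apply (Rmax_Cmod (wC p q t h u))]. eapply Rle_trans; [|apply Rmax_l].
  right. unfold wC. simpl. f_equal. ring.
Qed.

Lemma rem_bound2 p q t h u : 0 < p -> 0 < t -> Rabs h < t / 2 ->
  Rabs (f2 p q (t + h) u - f2 p q t u - h * d2 p q t u) <= h ^ 2 * Bc p q t u.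
Proof.
  intros Hp Ht Hh. assert (Hth : 0 < t + h) by (apply Rabs_def2 in Hh; lra).
  rewrite (f2_C p q (t + h)), (f2_C p q t), (d2_C p q t) by auto.
  eapply Rle_trans; [|apply (wC_bound p q t h u); auto].
  eapply Rle_trans; [|apply (Rmax_Cmod (wC p q t h u))]. eapply Rle_trans; [|apply Rmax_r].
  right. unfold wC. simpl. f_equal. ring.
Qed.

Lemma Bc_II p q t : II (Bc p q t) ((2 * Cmod (zc p q) ^ 2 / (t * p) ^ 3) * Gc).
Proof. eapply II_ext; [|apply II_scal, Gc_II]. intros u; unfold Bc; simpl; ring. Qed.

Lemma F1_deriv p q t : 0 < p -> 0 < t -> is_derive (F1 p q) t (R1 p q t).
Proof.
  intros Hp Ht.
  apply (II_param_derive (f1 p q) (F1 p q) (d1 p q t) (Bc p q t) ((2 * Cmod (zc p q) ^ 2 / (t * p) ^ 3) * Gc) _ t (t / 2)).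
  lra. intros s Hs. apply F1_II; auto. apply Rabs_def2 in Hs; lra.
  apply d1_II; auto. apply Bc_II.
  intros h u Hh. apply rem_bound1; auto.
Qed.

Lemma F2_deriv p q t : 0 < p -> 0 < t -> is_derive (F2 p q) t (R2 p q t).
Proof.
  intros Hp Ht.
  apply (II_param_derive (f2 p q) (F2 p q) (d2 p q t) (Bc p q t) ((2 * Cmod (zc p q) ^ 2 / (t * p) ^ 3) * Gc) _ t (t / 2)).
  lra. intros s Hs. apply F2_II; auto. apply Rabs_def2 in Hs; lra.
  apply d2_II; auto. apply Bc_II.
  intros h u Hh. apply rem_bound2; auto.
Qed.


Lemma is_derive_eqv (f : R -> R) x a b : is_derive f x a -> a = b -> is_derive f x b.
Proof. intros H E; subst; auto. Qed.

Lemma dmul (f g : R -> R) x a b : is_derive f x a -> is_derive g x b ->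
  is_derive (fun s => f s * g s) x (a * g x + f x * b).
Proof. intros Hf Hg. exact (is_derive_mult (K := R_AbsRing) f g x a b Hf Hg Rmult_comm). Qed.

Lemma dplus (f g : R -> R) x a b : is_derive f x a -> is_derive g x b ->
  is_derive (fun s => f s + g s) x (a + b).
Proof. intros Hf Hg. exact (is_derive_plus (K := R_AbsRing) (V := R_NormedModule) f g x a b Hf Hg). Qed.

Lemma dminus (f g : R -> R) x a b : is_derive f x a -> is_derive g x b ->
  is_derive (fun s => f s - g s) x (a - b).
Proof. intros Hf Hg. exact (is_derive_minus (K := R_AbsRing) (V := R_NormedModule) f g x a b Hf Hg). Qed.

Lemma dconst (k : R) x : is_derive (fun _ => k) x 0.
Proof. exact (is_derive_const (K := R_AbsRing) (V := R_NormedModule) k x). Qed.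

Lemma dext (f g : R -> R) x a : (forall s, f s = g s) -> is_derive f x a -> is_derive g x a.
Proof. intros E H. apply (is_derive_ext f g); auto. Qed.

Definition cderiv (f : R -> C) (t : R) (d : C) :=
  is_derive (fun s => fst (f s)) t (fst d) /\ is_derive (fun s => snd (f s)) t (snd d).

Lemma cderiv_mult f g t df dg : cderiv f t df -> cderiv g t dg ->
  cderiv (fun s => (f s * g s)%C) t (df * g t + f t * dg)%C.
Proof.
  intros [H1 H2] [K1 K2]. split; simpl.
  - eapply is_derive_eqv. apply dminus; apply dmul; eauto. simpl; ring.
  - eapply is_derive_eqv. apply dplus; apply dmul; eauto. simpl; ring.
Qed.

Lemma cderiv_plus f g t df dg : cderiv f t df -> cderiv g t dg ->
  cderiv (fun s => (f s + g s)%C) t (df + dg)%C.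
Proof. intros [H1 H2] [K1 K2]. split; simpl; apply dplus; auto. Qed.

Lemma cderiv_minus f g t df dg : cderiv f t df -> cderiv g t dg ->
  cderiv (fun s => (f s - g s)%C) t (df - dg)%C.
Proof. intros [H1 H2] [K1 K2]. split; simpl; eapply is_derive_eqv; [apply dminus; eauto| simpl; ring | apply dminus; eauto | simpl; ring]. Qed.

Lemma cderiv_const (k : C) t : cderiv (fun _ => k) t (RtoC 0).
Proof. split; apply dconst. Qed.

Lemma cderiv_ext f g t d : (forall s, f s = g s) -> cderiv f t d -> cderiv g t d.
Proof. intros E [H1 H2]; split; eapply dext; eauto; intros; simpl; rewrite E; auto. Qed.

Lemma cderiv_eqv f t a b : cderiv f t a -> a = b -> cderiv f t b.
Proof. intros H E; subst; auto. Qed.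

Lemma cexp_sq_fst s a b : fst (cexp (RtoC s * (a, b) * (RtoC s * (a, b))))%C = exp (s * s * (a * a - b * b)) * cos (s * s * (2 * a * b)).
Proof. unfold cexp, RtoC, Cmult; simpl. f_equal; f_equal; ring. Qed.
Lemma cexp_sq_snd s a b : snd (cexp (RtoC s * (a, b) * (RtoC s * (a, b))))%C = exp (s * s * (a * a - b * b)) * sin (s * s * (2 * a * b)).
Proof. unfold cexp, RtoC, Cmult; simpl. f_equal; f_equal; ring. Qed.

Lemma der_ec al be t : is_derive (fun s => exp (s * s * al) * cos (s * s * be)) t
  (2 * t * al * (exp (t * t * al) * cos (t * t * be)) - 2 * t * be * (exp (t * t * al) * sin (t * t * be))).
Proof. auto_derive; auto. ring. Qed.
Lemma der_es al be t : is_derive (fun s => exp (s * s * al) * sin (s * s * be)) t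
  (2 * t * be * (exp (t * t * al) * cos (t * t * be)) + 2 * t * al * (exp (t * t * al) * sin (t * t * be))).
Proof. auto_derive; auto. ring. Qed.

Lemma cderiv_cexp_sq (w : C) t :
  cderiv (fun s => cexp (RtoC s * w * (RtoC s * w)))%C t
    (RtoC (2 * t) * (w * w) * cexp (RtoC t * w * (RtoC t * w)))%C.
Proof.
  destruct w as [a b]. split.
  - eapply dext. intros s; symmetry; apply cexp_sq_fst.
    eapply is_derive_eqv. apply der_ec.
    set (E := cexp (RtoC t * (a, b) * (RtoC t * (a, b)))%C).
    replace (fst (RtoC (2 * t) * ((a, b) * (a, b)) * E))%C with
      (2 * t * (a * a - b * b) * fst E - 2 * t * (2 * a * b) * snd E) by (unfold RtoC; simpl; ring).
    unfold E; rewrite cexp_sq_fst, cexp_sq_snd. reflexivity.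
  - eapply dext. intros s; symmetry; apply cexp_sq_snd.
    eapply is_derive_eqv. apply der_es.
    set (E := cexp (RtoC t * (a, b) * (RtoC t * (a, b)))%C).
    replace (snd (RtoC (2 * t) * ((a, b) * (a, b)) * E))%C with
      (2 * t * (2 * a * b) * fst E + 2 * t * (a * a - b * b) * snd E) by (unfold RtoC; simpl; ring).
    unfold E; rewrite cexp_sq_fst, cexp_sq_snd. reflexivity.
Qed.

Lemma cexp_neg (w : C) : (cexp w * cexp (- w) = 1)%C.
Proof.
  destruct w as [a b]. unfold cexp, Copp, Cmult; simpl.
  rewrite cos_neg, sin_neg.
  assert (E : exp a * exp (- a) = 1) by (rewrite <- exp_plus; replace (a + - a) with 0 by ring; apply exp_0).
  pose proof (sin2_cos2 b). unfold Rsqr in *.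
  apply injective_projections; simpl.
  - replace (exp a * cos b * (exp (- a) * cos b) - exp a * sin b * (exp (- a) * - sin b))
      with ((exp a * exp (- a)) * (sin b * sin b + cos b * cos b)) by ring. rewrite E, H. ring.
  - replace (exp a * cos b * (exp (- a) * - sin b) + exp a * sin b * (exp (- a) * cos b)) with 0 by ring.
    reflexivity.
Qed.

Definition gz (z : C) (s : R) : C := cexp (Copp (Cmult (RtoC s * z) (RtoC s * z))).

Lemma gz_fst z s : fst (gz z s) = exp (- (s * s * (fst z * fst z - snd z * snd z))) * cos (- (s * s * (2 * fst z * snd z))).
Proof. destruct z as [a b]. unfold gz, cexp, RtoC, Cmult, Copp; simpl. f_equal; f_equal; ring. Qed.
Lemma gz_snd z s : snd (gz z s) = exp (- (s * s * (fst z * fst z - snd z * snd z))) * sin (- (s * s * (2 * fst z * snd z))).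
Proof. destruct z as [a b]. unfold gz, cexp, RtoC, Cmult, Copp; simpl. f_equal; f_equal; ring. Qed.

Lemma gz_fst_cont z s : continuous (fun s => fst (gz z s)) s.
Proof. eapply continuous_ext. intros x; symmetry; apply gz_fst.
  apply cont_of_ex_derive. auto_derive. auto. Qed.
Lemma gz_snd_cont z s : continuous (fun s => snd (gz z s)) s.
Proof. eapply continuous_ext. intros x; symmetry; apply gz_snd.
  apply cont_of_ex_derive. auto_derive. auto. Qed.

Lemma gz_ex z a b : ex_RInt (V := C_R_NormedModule) (gz z) a b.
Proof.
  apply (ex_RInt_fct_extend_pair (U := R_NormedModule) (V := R_NormedModule)).
  apply ex_RInt_contR; intros; apply gz_fst_cont.
  apply ex_RInt_contR; intros; apply gz_snd_cont.
Qed.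

Definition Iz (z : C) (t : R) : C := RInt (V := C_R_CompleteNormedModule) (gz z) 0 t.

Lemma Iz_fst z t : fst (Iz z t) = RInt (fun s => fst (gz z s)) 0 t.
Proof.
  symmetry. apply is_RInt_unique.
  apply (is_RInt_fct_extend_fst (U := R_NormedModule) (V := R_NormedModule)).
  apply (RInt_correct (V := C_R_CompleteNormedModule)). apply gz_ex.
Qed.
Lemma Iz_snd z t : snd (Iz z t) = RInt (fun s => snd (gz z s)) 0 t.
Proof.
  symmetry. apply is_RInt_unique.
  apply (is_RInt_fct_extend_snd (U := R_NormedModule) (V := R_NormedModule)).
  apply (RInt_correct (V := C_R_CompleteNormedModule)). apply gz_ex.
Qed.

Lemma cderiv_Iz z t : cderiv (Iz z) t (gz z t).
Proof.
  split.
  - eapply dext. intros s; symmetry; apply Iz_fst.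
    apply (is_derive_RInt (V := R_NormedModule) (fun s => fst (gz z s)) (fun b => RInt (fun s => fst (gz z s)) 0 b) 0 t).
    apply filter_forall. intros; apply RInt_correctR. apply ex_RInt_contR; intros; apply gz_fst_cont.
    apply gz_fst_cont.
  - eapply dext. intros s; symmetry; apply Iz_snd.
    apply (is_derive_RInt (V := R_NormedModule) (fun s => snd (gz z s)) (fun b => RInt (fun s => snd (gz z s)) 0 b) 0 t).
    apply filter_forall. intros; apply RInt_correctR. apply ex_RInt_contR; intros; apply gz_snd_cont.
    apply gz_snd_cont.
Qed.

Definition kc : C := RtoC (2 / sqrt PI).
Definition Phi (z : C) (t : R) : C :=
  Cmult (cexp (RtoC t * z * (RtoC t * z))) (Cminus 1 (Cmult kc (Cmult z (Iz z t)))).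

Lemma Phi_1 z : Phi z 1 = erfcx z.
Proof. unfold Phi, erfcx, int0_exp_msq, Iz, kc. rewrite Cmult_1_l. reflexivity. Qed.

Lemma cderiv_Phi z t : cderiv (Phi z) t (RtoC (2 * t) * (z * z) * Phi z t - kc * z)%C.
Proof.
  unfold Phi.
  eapply cderiv_eqv.
  apply cderiv_mult. apply cderiv_cexp_sq.
  apply cderiv_minus. apply cderiv_const.
  apply cderiv_mult. apply cderiv_const. apply cderiv_mult. apply cderiv_const. apply cderiv_Iz.
  assert (K : (cexp (RtoC t * z * (RtoC t * z)) * gz z t = 1)%C) by (unfold gz; apply cexp_neg).
  set (E := cexp (RtoC t * z * (RtoC t * z))) in *.
  transitivity (RtoC (2 * t) * (z * z) * (E * (1 - kc * (z * Iz z t))) - kc * z * (E * gz z t))%C.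
  ring. rewrite K. ring.
Qed.


Definition Fc (p q t : R) : C := (F1 p q t, F2 p q t).
Definition cc : R := Gc * sqrt PI.
Definition Hc (p q t : R) : C := (Fc p q t - RtoC cc * Phi (p, q) t)%C.
Definition Mc (p q t : R) : C := (Hc p q t * gz (p, q) t)%C.

Lemma cderiv_Fc p q t : 0 < p -> 0 < t ->
  cderiv (Fc p q) t (RtoC (2 * t) * ((p, q) * (p, q)) * Fc p q t - RtoC (2 * Gc) * (p, q))%C.
Proof.
  intros Hp Ht. split; simpl.
  - eapply is_derive_eqv. apply F1_deriv; auto. unfold R1; simpl. ring.
  - eapply is_derive_eqv. apply F2_deriv; auto. unfold R2; simpl. ring.
Qed.

Lemma gz_alt z s : gz z s = cexp (RtoC s * (Ci * z) * (RtoC s * (Ci * z)))%C.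
Proof. unfold gz. f_equal. destruct z as [a b]. unfold Ci, RtoC, Cmult, Copp; apply injective_projections; simpl; ring. Qed.

Lemma cderiv_gz z t : cderiv (gz z) t (- (RtoC (2 * t) * (z * z) * gz z t))%C.
Proof.
  eapply cderiv_ext. intros s; symmetry; apply gz_alt.
  eapply cderiv_eqv. apply cderiv_cexp_sq. rewrite <- gz_alt.
  destruct z as [a b]. unfold Ci, RtoC, Cmult, Copp; apply injective_projections; simpl; ring.
Qed.

Lemma cc_kc : (RtoC cc * kc = RtoC (2 * Gc))%C.
Proof.
  unfold cc, kc, RtoC, Cmult. pose proof (sqrt_lt_R0 PI PI_RGT_0).
  apply injective_projections; simpl; field; lra.
Qed.

Lemma cderiv_Mc p q t : 0 < p -> 0 < t -> cderiv (Mc p q) t (RtoC 0).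
Proof.
  intros Hp Ht. unfold Mc, Hc.
  eapply cderiv_eqv. apply cderiv_mult. apply cderiv_minus. apply cderiv_Fc; auto.
  apply cderiv_mult. apply cderiv_const. apply cderiv_Phi. apply cderiv_gz.
  transitivity ((RtoC cc * kc - RtoC (2 * Gc)) * (p, q) * gz (p, q) t)%C.
  ring. rewrite cc_kc. ring.
Qed.

Lemma const_of_deriv0 (f : R -> R) a b : a <= b -> (forall x, a <= x <= b -> is_derive f x 0) -> f a = f b.
Proof.
  intros Hab Hd.
  destruct (MVT_gen f a b (fun _ => 0)) as [c [_ Hc]].
  - intros x Hx. rewrite Rmin_left, Rmax_right in Hx by lra. apply Hd; lra.
  - intros x Hx. rewrite Rmin_left, Rmax_right in Hx by lra.
    apply (proj2 (continuity_pt_filterlim f x)). apply cont_of_ex_derive. exists 0. apply Hd; lra.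
  - lra.
Qed.

Lemma const_of_cderiv0 (f : R -> C) a b : a <= b -> (forall x, a <= x <= b -> cderiv f x (RtoC 0)) -> f a = f b.
Proof.
  intros Hab Hd. apply injective_projections.
  apply (const_of_deriv0 (fun s => fst (f s))); auto. intros x Hx; apply (Hd x Hx).
  apply (const_of_deriv0 (fun s => snd (f s))); auto. intros x Hx; apply (Hd x Hx).
Qed.

Lemma Mc_const p q t : 0 < p -> 0 < t -> t <= 1 -> Mc p q t = Mc p q 1.
Proof. intros Hp Ht Ht1. apply const_of_cderiv0; auto. intros x Hx. apply cderiv_Mc; auto; lra. Qed.


Lemma key1 m e v c : 0 < e -> 0 <= m <= 1 -> m <= (v + c) ^ 2 ->
  m * e / (e ^ 2 + v ^ 2) <= 3 * e * (1 / (1 ^ 2 + v ^ 2)) + 2 * c ^ 2 * (e / (e ^ 2 + v ^ 2)).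
Proof.
  intros He Hm Hmu. pose proof (pow2_ge_0 v). pose proof (pow2_ge_0 c).
  assert (HD : 0 < e ^ 2 + v ^ 2) by nra.
  assert (K : (m - 2 * c ^ 2) * (1 + v ^ 2) <= 3 * (e ^ 2 + v ^ 2)).
  { destruct (Rle_dec m (2 * c ^ 2)). assert (0 <= (2 * c ^ 2 - m) * (1 + v ^ 2)) by (apply Rmult_le_pos; nra). nra.
    pose proof (pow2_ge_0 (v - c)).
    assert (m - 2 * c ^ 2 <= 2 * v ^ 2) by nra.
    assert (0 <= (1 - (m - 2 * c ^ 2)) * v ^ 2) by (apply Rmult_le_pos; nra). nra. }
  apply Rmult_le_reg_r with ((e ^ 2 + v ^ 2) * (1 + v ^ 2) / e).
  apply Rdiv_lt_0_compat; nra.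
  replace (m * e / (e ^ 2 + v ^ 2) * ((e ^ 2 + v ^ 2) * (1 + v ^ 2) / e)) with (m * (1 + v ^ 2)) by (field; lra).
  replace ((3 * e * (1 / (1 ^ 2 + v ^ 2)) + 2 * c ^ 2 * (e / (e ^ 2 + v ^ 2))) * ((e ^ 2 + v ^ 2) * (1 + v ^ 2) / e))
    with (3 * (e ^ 2 + v ^ 2) + 2 * c ^ 2 * (1 + v ^ 2)) by (field; lra).
  nra.
Qed.

Lemma gau_le1 u : gau u <= 1.
Proof. pose proof (gau_le u). pose proof (pow2_ge_0 u).
  assert (1 / (1 ^ 2 + (u - 0) ^ 2) <= 1).
  { apply Rmult_le_reg_r with (1 ^ 2 + (u - 0) ^ 2). nra.
    replace (1 / (1 ^ 2 + (u - 0) ^ 2) * (1 ^ 2 + (u - 0) ^ 2)) with 1 by (field; nra). nra. }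
  lra. Qed.

Lemma gau_ge u : 1 - u ^ 2 <= gau u.
Proof. unfold gau. pose proof (exp_ineq1_le (- u ^ 2)). lra. Qed.

Lemma II_zero : II (fun _ => 0) 0.
Proof. assert (K := II_scal _ 0 _ (II_kernel 1 0 Rlt_0_1)). replace (0 * PI) with 0 in K by ring.
  eapply II_ext; [|exact K]. intros; simpl; ring. Qed.

Lemma F1_bound p q t : 0 < p -> 0 < t ->
  0 <= PI - F1 p q t <= 3 * (t * p) * PI + 2 * (t * q) ^ 2 * PI.
Proof.
  intros Hp Ht. set (e := t * p). set (c := t * q).
  assert (He : 0 < e) by (unfold e; nra).
  set (P := fun u => e / (e ^ 2 + (u - c) ^ 2)).
  assert (HP : II P PI) by (apply II_kernel; auto).
  assert (H1 : II (fun u => P u - f1 p q t u) (PI - F1 p q t)) by (apply II_minus; auto; apply F1_II; auto).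
  assert (Hpt : forall u, 0 <= P u - f1 p q t u <= 3 * e * (1 / (1 ^ 2 + (u - c) ^ 2)) + 2 * c ^ 2 * P u).
  { intros u. unfold P, f1, Dn. fold e c.
    pose proof (pow2_ge_0 (u - c)). assert (HD : 0 < e ^ 2 + (u - c) ^ 2) by nra.
    pose proof (gau_pos u). pose proof (gau_le1 u). pose proof (gau_ge u).
    replace (e / (e ^ 2 + (u - c) ^ 2) - gau u * e / (e ^ 2 + (u - c) ^ 2))
      with ((1 - gau u) * e / (e ^ 2 + (u - c) ^ 2)) by (field; lra).
    split. apply Rdiv_le_0_compat; nra.
    apply key1; auto. lra. replace (u - c + c) with u by ring. lra. }
  split.
  - apply (II_le (fun _ => 0) (fun u => P u - f1 p q t u)); auto.
    intros u; apply Hpt.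
    apply II_zero.
  - apply (II_le (fun u => P u - f1 p q t u) (fun u => 3 * e * (1 / (1 ^ 2 + (u - c) ^ 2)) + 2 * c ^ 2 * P u)); auto.
    intros u; apply Hpt.
    apply II_plus; apply II_scal; auto. apply II_kernel; lra.
Qed.

Lemma exp_le_exp' x y : x <= y -> exp x <= exp y.
Proof. intros [H|H]. left; apply exp_increasing; auto. subst; lra. Qed.

Lemma exp_diff_pos x : 0 <= x -> Rabs (exp (-x) - exp x) <= 2 * x * exp x.
Proof.
  intros Hx.
  assert (E : exp (- x) = exp x * exp (- (2 * x))) by (rewrite <- exp_plus; f_equal; ring).
  pose proof (exp_ineq1_le (- (2 * x))). pose proof (exp_pos x). pose proof (exp_pos (- (2 * x))).
  assert (exp (- (2 * x)) <= 1) by (rewrite <- exp_0; apply exp_le_exp'; lra).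
  rewrite Rabs_left1 by (rewrite E; nra). rewrite E. nra.
Qed.

Lemma exp_diff x : Rabs (exp (-x) - exp x) <= 2 * Rabs x * exp (Rabs x).
Proof.
  destruct (Rle_dec 0 x).
  - rewrite (Rabs_pos_eq x) by auto. apply exp_diff_pos; auto.
  - rewrite (Rabs_left x) by lra. rewrite <- Rabs_Ropp.
    replace (- (exp (- x) - exp x)) with (exp (- - x) - exp (- x)) by (rewrite Ropp_involutive; ring).
    apply exp_diff_pos; lra.
Qed.

Lemma key2 v c e : 0 < e -> Rabs c <= 1 / 2 ->
  Rabs ((exp (- (v + c) ^ 2) - exp (- (v - c) ^ 2)) * v / (e ^ 2 + v ^ 2))
   <= 4 * Rabs c * exp (1 / 2) * exp (- v ^ 2 / 2).
Proof.
  intros He Hc. pose proof (pow2_ge_0 v). assert (HD : 0 < e ^ 2 + v ^ 2) by nra.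
  assert (E : exp (- (v + c) ^ 2) - exp (- (v - c) ^ 2) = exp (- v ^ 2 - c ^ 2) * (exp (- (2 * v * c)) - exp (2 * v * c))).
  { rewrite Rmult_minus_distr_l, <- !exp_plus. f_equal; f_equal; ring. }
  rewrite E.
  pose proof (exp_diff (2 * v * c)) as K.
  assert (Hvc : Rabs (2 * v * c) = 2 * (Rabs v * Rabs c)) by (rewrite !Rabs_mult, Rabs_pos_eq by lra; ring).
  rewrite Hvc in K.
  pose proof (Rabs_pos v). pose proof (Rabs_pos c).
  assert (Hv2 : Rabs v * Rabs v = v ^ 2) by (rewrite <- Rabs_mult; rewrite Rabs_pos_eq; [ring| nra]).
  assert (B1 : exp (- v ^ 2 - c ^ 2) <= exp (- v ^ 2)) by (apply exp_le_exp'; pose proof (pow2_ge_0 c); lra).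
  assert (B2 : exp (- v ^ 2) * exp (2 * (Rabs v * Rabs c)) <= exp (1 / 2) * exp (- v ^ 2 / 2)).
  { rewrite <- !exp_plus. apply exp_le_exp'.
    assert (Rabs v * Rabs c <= Rabs v / 2) by nra.
    pose proof (pow2_ge_0 (Rabs v - 1)). nra. }
  assert (B3 : v ^ 2 / (e ^ 2 + v ^ 2) <= 1).
  { apply Rmult_le_reg_r with (e ^ 2 + v ^ 2); auto. unfold Rdiv; rewrite Rmult_assoc, Rinv_l by lra. nra. }
  assert (B3' : 0 <= v ^ 2 / (e ^ 2 + v ^ 2)) by (apply Rdiv_le_0_compat; nra).
  pose proof (exp_pos (1/2)). pose proof (exp_pos (- v ^ 2 / 2)).
  set (K2 := exp (1/2)) in *. set (K3 := exp (- v ^ 2 / 2)) in *. set (F := v ^ 2 / (e ^ 2 + v ^ 2)) in *.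
  unfold Rdiv. rewrite !Rabs_mult. rewrite (Rabs_pos_eq (exp _)) by (left; apply exp_pos).
  rewrite (Rabs_pos_eq (/ (e ^ 2 + v ^ 2))) by (left; apply Rinv_0_lt_compat; auto).
  pose proof (exp_pos (- v ^ 2 - c ^ 2)). pose proof (exp_pos (- v ^ 2)).
  pose proof (exp_pos (2 * (Rabs v * Rabs c))). pose proof (exp_pos (1/2)). pose proof (exp_pos (- v ^ 2 / 2)).
  pose proof (Rabs_pos (exp (- (2 * v * c)) - exp (2 * v * c))).
  apply Rle_trans with (exp (- v ^ 2) * (2 * (2 * (Rabs v * Rabs c)) * exp (2 * (Rabs v * Rabs c))) * Rabs v * / (e ^ 2 + v ^ 2)).
  { apply Rmult_le_compat_r. left; apply Rinv_0_lt_compat; auto.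
    apply Rmult_le_compat_r; auto. apply Rmult_le_compat; auto; lra. }
  replace (exp (- v ^ 2) * (2 * (2 * (Rabs v * Rabs c)) * exp (2 * (Rabs v * Rabs c))) * Rabs v * / (e ^ 2 + v ^ 2))
    with (4 * Rabs c * (exp (- v ^ 2) * exp (2 * (Rabs v * Rabs c))) * F) by (unfold F; rewrite <- Hv2; field; lra).
  apply Rle_trans with (4 * Rabs c * (K2 * K3) * 1).
  - apply Rmult_le_compat; [ | lra | | lra].
    + apply Rmult_le_pos; [lra| nra].
    + apply Rmult_le_compat_l; lra.
  - right; unfold K2, K3; ring.
Qed.

Lemma II_shifted_gau c : II (fun u => exp (- (u - c) ^ 2 / 2)) (sqrt 2 * Gc).
Proof.
  assert (Hs : 0 < sqrt 2) by (apply sqrt_lt_R0; lra).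
  assert (Hs2 : sqrt 2 * sqrt 2 = 2) by (apply sqrt_sqrt; lra).
  assert (K := II_affine gau Gc (- c / sqrt 2) (/ sqrt 2) ltac:(apply Rinv_0_lt_compat; auto) Gc_II).
  assert (K2 := II_scal _ (sqrt 2) _ K).
  eapply II_ext; [|exact K2]. intros u. cbv beta. unfold gau.
  replace (- (- c / sqrt 2 + / sqrt 2 * u) ^ 2) with (- (u - c) ^ 2 / 2).
  field. lra.
  replace ((- c / sqrt 2 + / sqrt 2 * u) ^ 2) with ((u - c) ^ 2 / (sqrt 2 * sqrt 2)) by (field; lra).
  rewrite Hs2. field.
Qed.

Lemma F2_bound p q t : 0 < p -> 0 < t -> Rabs (t * q) <= 1 / 2 ->
  Rabs (F2 p q t) <= 2 * Rabs (t * q) * exp (1 / 2) * (sqrt 2 * Gc).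
Proof.
  intros Hp Ht Hc. set (c := t * q) in *. set (e := t * p).
  assert (He : 0 < e) by (unfold e; nra).
  assert (K1 := F2_II p q t Hp Ht).
  assert (K2 := II_refl _ _ (2 * c) K1).
  assert (K3 := II_plus _ _ _ _ K1 K2).
  assert (Hpt : forall u, f2 p q t u + f2 p q t (2 * c - u) =
     (exp (- ((u - c) + c) ^ 2) - exp (- ((u - c) - c) ^ 2)) * (u - c) / (e ^ 2 + (u - c) ^ 2)).
  { intros u. unfold f2, Dn, gau. fold e c.
    pose proof (pow2_ge_0 (u - c)). assert (0 < e ^ 2 + (u - c) ^ 2) by nra.
    replace (- ((u - c) + c) ^ 2) with (- u ^ 2) by ring.
    replace (- ((u - c) - c) ^ 2) with (- (2 * c - u) ^ 2) by ring.
    replace ((2 * c - u - c) ^ 2) with ((u - c) ^ 2) by ring.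
    field. lra. }
  assert (K4 : II (fun u => 4 * Rabs c * exp (1 / 2) * exp (- (u - c) ^ 2 / 2)) (4 * Rabs c * exp (1 / 2) * (sqrt 2 * Gc))).
  { apply II_scal, II_shifted_gau. }
  assert (B := II_abs_le _ _ _ _ (fun u => ltac:(rewrite Hpt; apply key2; auto)) K3 K4).
  replace (F2 p q t + F2 p q t) with (2 * F2 p q t) in B by ring.
  rewrite Rabs_mult, Rabs_pos_eq in B by lra. lra.
Qed.


Definition lim0 (f : R -> R) (l : R) := forall eps, 0 < eps ->
  exists del, 0 < del /\ forall t, 0 < t < del -> Rabs (f t - l) < eps.

Lemma lim0_const k : lim0 (fun _ => k) k.
Proof. intros eps He. exists 1. split. lra. intros. replace (k - k) with 0 by ring. rewrite Rabs_R0. auto. Qed.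

Lemma lim0_plus f g a b : lim0 f a -> lim0 g b -> lim0 (fun t => f t + g t) (a + b).
Proof.
  intros Hf Hg eps He. destruct (Hf (eps/2)) as [d1 [Hd1 H1]]; [lra|]. destruct (Hg (eps/2)) as [d2 [Hd2 H2]]; [lra|].
  exists (Rmin d1 d2). split. apply Rmin_glb_lt; auto.
  intros t Ht. pose proof (Rmin_l d1 d2); pose proof (Rmin_r d1 d2).
  specialize (H1 t ltac:(lra)). specialize (H2 t ltac:(lra)).
  replace (f t + g t - (a + b)) with ((f t - a) + (g t - b)) by ring.
  eapply Rle_lt_trans; [apply Rabs_triang|]. lra.
Qed.

Lemma lim0_opp f a : lim0 f a -> lim0 (fun t => - f t) (- a).
Proof. intros Hf eps He. destruct (Hf eps He) as [d [Hd H]]. exists d; split; auto.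
  intros t Ht. replace (- f t - - a) with (- (f t - a)) by ring. rewrite Rabs_Ropp; auto. Qed.

Lemma lim0_minus f g a b : lim0 f a -> lim0 g b -> lim0 (fun t => f t - g t) (a - b).
Proof. intros Hf Hg. apply (lim0_plus f (fun t => - g t)); auto. apply lim0_opp; auto. Qed.

Lemma lim0_mult f g a b : lim0 f a -> lim0 g b -> lim0 (fun t => f t * g t) (a * b).
Proof.
  intros Hf Hg eps He.
  set (K := 1 + Rabs a + Rabs b). pose proof (Rabs_pos a); pose proof (Rabs_pos b).
  assert (HK : 0 < K) by (unfold K; lra).
  set (eta := Rmin 1 (eps / K)).
  assert (Heta : 0 < eta) by (unfold eta; apply Rmin_glb_lt; [lra | apply Rdiv_lt_0_compat; auto]).
  assert (Heta1 : eta <= 1) by apply Rmin_l.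
  assert (Heta2 : eta * K <= eps).
  { assert (eta <= eps / K) by apply Rmin_r. apply Rmult_le_reg_r with (/ K). apply Rinv_0_lt_compat; auto.
    replace (eta * K * / K) with eta by (field; lra). auto. }
  destruct (Hf eta Heta) as [d1 [Hd1 H1]]. destruct (Hg eta Heta) as [d2 [Hd2 H2]].
  exists (Rmin d1 d2). split. apply Rmin_glb_lt; auto.
  intros t Ht. pose proof (Rmin_l d1 d2); pose proof (Rmin_r d1 d2).
  specialize (H1 t ltac:(lra)). specialize (H2 t ltac:(lra)).
  replace (f t * g t - a * b) with ((f t - a) * (g t - b) + a * (g t - b) + b * (f t - a)) by ring.
  eapply Rle_lt_trans. eapply Rle_trans; [apply Rabs_triang|]. apply Rplus_le_compat_r; apply Rabs_triang.
  rewrite !Rabs_mult. pose proof (Rabs_pos (f t - a)); pose proof (Rabs_pos (g t - b)).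
  apply Rlt_le_trans with (eta * K); auto. unfold K.
  assert (Rabs (f t - a) * Rabs (g t - b) <= Rabs (f t - a) * 1) by (apply Rmult_le_compat_l; lra).
  assert (Rabs a * Rabs (g t - b) <= Rabs a * eta) by (apply Rmult_le_compat_l; lra).
  assert (Rabs b * Rabs (f t - a) <= Rabs b * eta) by (apply Rmult_le_compat_l; lra).
  lra.
Qed.

Lemma lim0_scal k f a : lim0 f a -> lim0 (fun t => k * f t) (k * a).
Proof. intros H. apply (lim0_mult (fun _ => k) f); auto. apply lim0_const. Qed.

Lemma lim0_cont f : continuous f 0 -> lim0 f (f 0).
Proof.
  intros Hc eps He. destruct (proj1 (filterlim_locally f (f 0)) Hc (mkposreal eps He)) as [d Hd].
  exists d. split. apply cond_pos. intros t Ht. apply (Hd t). apply ball_R. simpl. rewrite Rminus_0_r, Rabs_pos_eq; lra.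
Qed.

Lemma lim0_ext f g l : (forall t, 0 < t -> f t = g t) -> lim0 f l -> lim0 g l.
Proof. intros E H eps He. destruct (H eps He) as [d [Hd K]]. exists d; split; auto.
  intros t Ht. rewrite <- E by lra. auto. Qed.

Lemma lim0_unique_const f k l : (forall t, 0 < t <= 1 -> f t = k) -> lim0 f l -> k = l.
Proof.
  intros E H. apply Rminus_diag_uniq. apply Rabs_eq_0.
  destruct (Rle_lt_or_eq_dec 0 (Rabs (k - l)) (Rabs_pos _)) as [Hp|Hp]; [|auto].
  exfalso. destruct (H (Rabs (k - l)) Hp) as [d [Hd K]].
  set (t := Rmin (d / 2) 1). assert (0 < t) by (unfold t; apply Rmin_glb_lt; lra).
  assert (t <= 1) by apply Rmin_r. assert (t <= d / 2) by apply Rmin_l.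
  specialize (K t ltac:(lra)). rewrite (E t) in K by lra. lra.
Qed.

Lemma lim0_bound f l (B : R -> R) : (forall t, 0 < t -> Rabs (f t - l) <= B t) -> lim0 B 0 -> lim0 f l.
Proof. intros HB H eps He. destruct (H eps He) as [d [Hd K]]. exists d; split; auto.
  intros t Ht. specialize (K t Ht). rewrite Rminus_0_r in K. eapply Rle_lt_trans; [apply HB; lra|].
  eapply Rle_lt_trans; [apply Rle_abs|auto]. Qed.

Lemma lim0_id : lim0 (fun t => t) 0.
Proof. intros eps He. exists eps. split; auto. intros t Ht. rewrite Rminus_0_r, Rabs_pos_eq; lra. Qed.

Lemma lim0_poly a b : lim0 (fun t => a * t + b * t ^ 2) 0.
Proof.
  intros eps He. set (K := Rabs a + Rabs b + 1). pose proof (Rabs_pos a); pose proof (Rabs_pos b).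
  assert (HK : 0 < K) by (unfold K; lra).
  exists (Rmin 1 (eps / K)). split. apply Rmin_glb_lt; [lra| apply Rdiv_lt_0_compat; auto].
  intros t [Ht1 Ht2]. pose proof (Rmin_l 1 (eps / K)); pose proof (Rmin_r 1 (eps / K)).
  rewrite Rminus_0_r. eapply Rle_lt_trans; [apply Rabs_triang|]. rewrite !Rabs_mult.
  rewrite (Rabs_pos_eq t), (Rabs_pos_eq (t ^ 2)) by (try apply pow2_ge_0; lra).
  assert (t * K < eps).
  { apply Rlt_le_trans with (eps / K * K). apply Rmult_lt_compat_r; lra. right; field; lra. }
  assert (Rabs b * t ^ 2 <= Rabs b * t) by (apply Rmult_le_compat_l; auto; simpl; nra).
  unfold K in *. nra.
Qed.

Lemma lim0_F1 p q : 0 < p -> lim0 (F1 p q) PI.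
Proof.
  intros Hp. apply (lim0_bound _ _ (fun t => (3 * p * PI) * t + (2 * q ^ 2 * PI) * t ^ 2)).
  - intros t Ht. destruct (F1_bound p q t Hp Ht). rewrite Rabs_minus_sym, Rabs_pos_eq by lra.
    replace (3 * p * PI * t + 2 * q ^ 2 * PI * t ^ 2) with (3 * (t * p) * PI + 2 * (t * q) ^ 2 * PI) by ring. lra.
  - apply lim0_poly.
Qed.

Lemma lim0_F2 p q : 0 < p -> lim0 (F2 p q) 0.
Proof.
  intros Hp. set (K := 2 * Rabs q * exp (1 / 2) * (sqrt 2 * Gc)).
  intros eps He. destruct (lim0_poly K 0 eps He) as [d [Hd H]].
  exists (Rmin d (1 / (2 * (Rabs q + 1)))). split.
  { apply Rmin_glb_lt; auto. apply Rdiv_lt_0_compat. lra. pose proof (Rabs_pos q); lra. }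
  intros t Ht. pose proof (Rmin_l d (1 / (2 * (Rabs q + 1)))). pose proof (Rmin_r d (1 / (2 * (Rabs q + 1)))).
  specialize (H t ltac:(lra)). rewrite Rminus_0_r in *.
  assert (Htq : Rabs (t * q) <= 1 / 2).
  { rewrite Rabs_mult, Rabs_pos_eq by lra. pose proof (Rabs_pos q).
    assert (t * (2 * (Rabs q + 1)) <= 1).
    { apply Rle_trans with (1 / (2 * (Rabs q + 1)) * (2 * (Rabs q + 1))). apply Rmult_le_compat_r; lra. right; field; lra. }
    nra. }
  eapply Rle_lt_trans; [apply (F2_bound p q t Hp ltac:(lra) Htq)|].
  replace (2 * Rabs (t * q) * exp (1 / 2) * (sqrt 2 * Gc)) with (K * t + 0 * t ^ 2)
    by (unfold K; rewrite Rabs_mult, (Rabs_pos_eq t) by lra; ring).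
  eapply Rle_lt_trans; [apply Rle_abs| exact H].
Qed.


Lemma cderiv_lim0_fst f d : cderiv f 0 d -> lim0 (fun t => fst (f t)) (fst (f 0)).
Proof. intros [H1 _]. apply (lim0_cont (fun t => fst (f t))). apply cont_of_ex_derive. eexists; eauto. Qed.
Lemma cderiv_lim0_snd f d : cderiv f 0 d -> lim0 (fun t => snd (f t)) (snd (f 0)).
Proof. intros [_ H1]. apply (lim0_cont (fun t => snd (f t))). apply cont_of_ex_derive. eexists; eauto. Qed.

Lemma cexp_0sq z : cexp (RtoC 0 * z * (RtoC 0 * z))%C = RtoC 1.
Proof. destruct z as [a b]. apply injective_projections.
  rewrite cexp_sq_fst. replace (0 * 0 * (a * a - b * b)) with 0 by ring. replace (0 * 0 * (2 * a * b)) with 0 by ring.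
  rewrite exp_0, cos_0. simpl; ring.
  rewrite cexp_sq_snd. replace (0 * 0 * (a * a - b * b)) with 0 by ring. replace (0 * 0 * (2 * a * b)) with 0 by ring.
  rewrite exp_0, sin_0. simpl; ring. Qed.

Lemma Iz_0 z : Iz z 0 = RtoC 0.
Proof. unfold Iz. rewrite RInt_point. reflexivity. Qed.

Lemma Phi_0 z : Phi z 0 = RtoC 1.
Proof. unfold Phi. rewrite Iz_0, cexp_0sq. ring. Qed.

Lemma gz_0 z : gz z 0 = RtoC 1.
Proof. rewrite gz_alt. apply cexp_0sq. Qed.

Lemma Mc_fst p q t : fst (Mc p q t) = (F1 p q t - cc * fst (Phi (p, q) t)) * fst (gz (p, q) t)
   - (F2 p q t - cc * snd (Phi (p, q) t)) * snd (gz (p, q) t).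
Proof. unfold Mc, Hc, Fc, RtoC. simpl. ring. Qed.
Lemma Mc_snd p q t : snd (Mc p q t) = (F1 p q t - cc * fst (Phi (p, q) t)) * snd (gz (p, q) t)
   + (F2 p q t - cc * snd (Phi (p, q) t)) * fst (gz (p, q) t).
Proof. unfold Mc, Hc, Fc, RtoC. simpl. ring. Qed.

Lemma Mc_1 p q : 0 < p -> Mc p q 1 = RtoC (PI - cc).
Proof.
  intros Hp.
  assert (LP1 := cderiv_lim0_fst _ _ (cderiv_Phi (p, q) 0)).
  assert (LP2 := cderiv_lim0_snd _ _ (cderiv_Phi (p, q) 0)).
  assert (LG1 := cderiv_lim0_fst _ _ (cderiv_gz (p, q) 0)).
  assert (LG2 := cderiv_lim0_snd _ _ (cderiv_gz (p, q) 0)).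
  rewrite Phi_0 in LP1, LP2. rewrite gz_0 in LG1, LG2. simpl in LP1, LP2, LG1, LG2.
  assert (L1 := lim0_F1 p q Hp). assert (L2 := lim0_F2 p q Hp).
  apply injective_projections.
  - apply (lim0_unique_const (fun t => fst (Mc p q t))).
    intros t Ht. rewrite (Mc_const p q t Hp) by lra. reflexivity.
    eapply lim0_ext. intros t _. symmetry. apply Mc_fst.
    replace (fst (RtoC (PI - cc))) with ((PI - cc * 1) * 1 - (0 - cc * 0) * 0) by (simpl; ring).
    apply lim0_minus; apply lim0_mult; auto; apply lim0_minus; auto; apply lim0_scal; auto.
  - apply (lim0_unique_const (fun t => snd (Mc p q t))).
    intros t Ht. rewrite (Mc_const p q t Hp) by lra. reflexivity.
    eapply lim0_ext. intros t _. symmetry. apply Mc_snd.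
    replace (snd (RtoC (PI - cc))) with ((PI - cc * 1) * 0 + (0 - cc * 0) * 1) by (simpl; ring).
    apply lim0_plus; apply lim0_mult; auto; apply lim0_minus; auto; apply lim0_scal; auto.
Qed.

Lemma Fc_1 p q : 0 < p -> Fc p q 1 = (RtoC cc * erfcx (p, q) + RtoC (PI - cc) * cexp ((p, q) * (p, q)))%C.
Proof.
  intros Hp. assert (K := Mc_1 p q Hp). unfold Mc, Hc in K. rewrite Phi_1 in K.
  assert (E : (gz (p, q) 1 * cexp ((p, q) * (p, q)) = 1)%C).
  { unfold gz. rewrite Cmult_comm. rewrite !Cmult_1_l. apply cexp_neg. }
  transitivity ((Fc p q 1 - RtoC cc * erfcx (p, q)) * (gz (p, q) 1 * cexp ((p, q) * (p, q))) + RtoC cc * erfcx (p, q))%C.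
  rewrite E. ring. rewrite Cmult_assoc, K. ring.
Qed.


Lemma Gc_nonneg : 0 <= Gc.
Proof. apply (II_le (fun _ => 0) gau). intros; left; apply gau_pos. apply II_zero. apply Gc_II. Qed.

Lemma F1_nonneg p q t : 0 < p -> 0 < t -> 0 <= F1 p q t.
Proof. intros Hp Ht. apply (II_le (fun _ => 0) (f1 p q t)); [|apply II_zero|apply F1_II; auto].
  intros u. unfold f1. pose proof (Dn_pos p q t u Hp Ht). pose proof (gau_pos u).
  assert (0 < t * p) by nra. apply Rdiv_le_0_compat; auto. apply Rmult_le_pos; lra. Qed.

Lemma F1_le p q t : 0 < p -> 0 < t -> F1 p q t <= / (t * p) * Gc.
Proof. intros Hp Ht. assert (K := II_abs_le (f1 p q t) (fun u => / (t * p) * gau u) _ _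
   (fun u => f1_bound p q t u Hp Ht) (F1_II p q t Hp Ht) (II_scal _ _ _ Gc_II)).
  eapply Rle_trans; [apply Rle_abs|exact K]. Qed.

Lemma J_eq p : 0 < p -> p * RInt (fun s => fst (gz (p, 0) s)) 0 1 = RInt gau 0 p.
Proof.
  intros Hp.
  assert (K := is_RInt_comp_lin gau p 0 0 1 (RInt gau 0 p)).
  replace (p * 0 + 0) with 0 in K by ring. replace (p * 1 + 0) with p in K by ring.
  specialize (K (RInt_correctR gau 0 p (gau_ex 0 p))).
  rewrite <- (is_RInt_unique _ _ _ _ K).
  rewrite <- RInt_scalR. apply RInt_ext. intros x _. rewrite gz_fst. simpl.
  unfold gau. replace (- (x * x * (p * p - 0 * 0))) with (- (p * x + 0) ^ 2) by ring.
  replace (- (x * x * (2 * p * 0))) with 0 by ring. rewrite cos_0. unfold scal; simpl; unfold mult; simpl. ring.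
  apply ex_RInt_contR; intros; apply gz_fst_cont.
Qed.

Lemma Iz_real p : Iz (p, 0) 1 = RtoC (RInt (fun s => fst (gz (p, 0) s)) 0 1).
Proof.
  apply injective_projections. rewrite Iz_fst. reflexivity.
  rewrite Iz_snd. transitivity (RInt (fun _ : R => 0) 0 1).
  apply RInt_ext. intros x _. rewrite gz_snd. simpl. replace (- (x * x * (2 * p * 0))) with 0 by ring. rewrite sin_0. ring.
  rewrite (RInt_const (V := R_CompleteNormedModule)). unfold scal; simpl; unfold mult; simpl. ring.
Qed.

Lemma cexp_real p s : cexp (RtoC s * (p, 0) * (RtoC s * (p, 0)))%C = RtoC (exp (s * s * (p * p))).
Proof. apply injective_projections.
  rewrite cexp_sq_fst. replace (s * s * (2 * p * 0)) with 0 by ring. rewrite cos_0.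
  simpl. replace (p * p - 0 * 0) with (p * p) by ring. ring.
  rewrite cexp_sq_snd. replace (s * s * (2 * p * 0)) with 0 by ring. rewrite sin_0. simpl. ring. Qed.

Lemma F1_real p : 0 < p -> F1 p 0 1 = exp (p * p) * (PI - 2 * Gc * RInt gau 0 p).
Proof.
  intros Hp. assert (K := Fc_1 p 0 Hp).
  rewrite <- Phi_1 in K. unfold Phi in K. rewrite Iz_real in K.
  assert (E1 : cexp ((p, 0) * (p, 0))%C = RtoC (exp (p * p))).
  { transitivity (cexp (RtoC 1 * (p, 0) * (RtoC 1 * (p, 0)))%C).
    f_equal. unfold RtoC, Cmult; simpl. apply injective_projections; simpl; ring.
    rewrite cexp_real. f_equal. f_equal. ring. }
  rewrite E1, cexp_real in K. rewrite <- (J_eq p Hp).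
  set (I1 := RInt (fun s => fst (gz (p, 0) s)) 0 1) in *.
  apply (f_equal fst) in K. unfold Fc in K. change (fst (F1 p 0 1, F2 p 0 1)) with (F1 p 0 1) in K.
  rewrite K.
  unfold kc, cc, RtoC, Cmult, Cminus, Cplus, Copp; simpl.
  pose proof (sqrt_lt_R0 PI PI_RGT_0).
  replace (1 * 1 * (p * p)) with (p * p) by ring. field. lra.
Qed.

Lemma gau_sym p : RInt gau (- p) p = 2 * RInt gau 0 p.
Proof.
  rewrite <- (RInt_ChaslesR gau (- p) 0 p) by apply gau_ex.
  destruct (RInt_refl gau 0 0 p (gau_ex _ _)) as [_ E].
  replace (0 - p) with (- p) in E by ring. replace (0 - 0) with 0 in E by ring.
  rewrite <- E. rewrite (RInt_ext (fun t => gau (0 - t)) gau). simpl; ring.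
  intros x _. unfold gau. f_equal. ring.
Qed.

Lemma Gc_sq : Gc * Gc = PI.
Proof.
  pose proof Gc_nonneg as HG. destruct Gc_II as [_ HII].
  apply Rminus_diag_uniq. apply Rabs_eq_0.
  destruct (Rle_lt_or_eq_dec 0 (Rabs (Gc * Gc - PI)) (Rabs_pos _)) as [Hp|Hp]; [|auto].
  exfalso. set (eps := Rabs (Gc * Gc - PI)) in *.
  destruct (HII (eps / (2 * (Gc + 1)))) as [M HM]. apply Rdiv_lt_0_compat; lra.
  set (p := Rabs M + 2 * (Gc + 1) / eps + 1).
  assert (Hq : 0 <= 2 * (Gc + 1) / eps) by (apply Rdiv_le_0_compat; lra).
  pose proof (Rabs_pos M). pose proof (Rle_abs M). pose proof (Rle_abs (- M)). rewrite Rabs_Ropp in *.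
  assert (Hp0 : 0 < p) by (unfold p; lra).
  assert (HS := HM (- p) p ltac:(unfold p; lra) ltac:(unfold p; lra)).
  rewrite gau_sym in HS.
  assert (A1 := F1_real p Hp0). assert (A2 := F1_nonneg p 0 1 Hp0 Rlt_0_1).
  assert (A3 := F1_le p 0 1 Hp0 Rlt_0_1). rewrite A1 in A2, A3.
  assert (Hex : 1 <= exp (p * p)) by (rewrite <- exp_0; apply exp_le_exp'; nra).
  destruct (ex_intro (fun J : R => RInt gau 0 p = J) _ eq_refl) as [J HJ]. rewrite HJ in *.
  assert (B1 : 0 <= PI - 2 * Gc * J) by nra.
  assert (B2 : PI - 2 * Gc * J <= Gc / p).
  { replace (/ (1 * p) * Gc) with (Gc / p) in A3 by (field; lra).
    assert (0 <= Gc / p) by (apply Rdiv_le_0_compat; lra). nra. }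
  assert (B3 : Gc / p <= eps / 2).
  { apply Rle_trans with (Gc / (2 * (Gc + 1) / eps)).
    - destruct (Req_dec Gc 0) as [Z|Z]. rewrite Z; unfold Rdiv; rewrite !Rmult_0_l; lra.
      apply Rmult_le_compat_l; [lra|]. apply Rinv_le_contravar. apply Rdiv_lt_0_compat; lra. unfold p; lra.
    - replace (Gc / (2 * (Gc + 1) / eps)) with (eps / 2 * (Gc / (Gc + 1))) by (field; lra).
      assert (Gc / (Gc + 1) <= 1).
      { apply Rmult_le_reg_r with (Gc + 1); [lra|]. replace (Gc / (Gc + 1) * (Gc + 1)) with Gc by (field; lra). lra. }
      nra. }
  assert (B4 : Gc * Rabs (2 * J - Gc) <= eps / 2 * (Gc / (Gc + 1))).
  { replace (eps / 2 * (Gc / (Gc + 1))) with (Gc * (eps / (2 * (Gc + 1)))) by (field; lra).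
    apply Rmult_le_compat_l; lra. }
  assert (B5 : Gc / (Gc + 1) < 1).
  { apply Rmult_lt_reg_r with (Gc + 1); [lra|]. replace (Gc / (Gc + 1) * (Gc + 1)) with Gc by (field; lra). lra. }
  assert (Rabs (Gc * Gc - PI) <= Rabs (PI - 2 * Gc * J) + Gc * Rabs (2 * J - Gc)).
  { replace (Gc * Gc - PI) with (- (PI - 2 * Gc * J) - Gc * (2 * J - Gc)) by ring.
    unfold Rminus at 1. eapply Rle_trans; [apply Rabs_triang|]. rewrite !Rabs_Ropp, Rabs_mult, (Rabs_pos_eq Gc) by lra. lra. }
  rewrite (Rabs_pos_eq (PI - 2 * Gc * J)) in H2 by lra.
  fold eps in H2. nra.
Qed.

Lemma cc_PI : cc = PI.
Proof.
  unfold cc. pose proof Gc_nonneg. pose proof Gc_sq.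
  rewrite <- (sqrt_square Gc) by auto. rewrite <- sqrt_mult by nra. rewrite H0.
  rewrite sqrt_mult by (pose proof PI_RGT_0; lra). apply sqrt_sqrt. pose proof PI_RGT_0; lra.
Qed.


Lemma II_ge_RInt f l a b : (forall u, 0 <= f u) -> II f l -> a <= b -> RInt f a b <= l.
Proof.
  intros Hf [Hex H] Hab. apply Rnot_lt_le. intros Hlt.
  destruct (H (RInt f a b - l)) as [M HM]; [lra|].
  set (A := Rabs M + Rabs a + Rabs b + 1).
  pose proof (Rabs_pos M); pose proof (Rabs_pos a); pose proof (Rabs_pos b).
  pose proof (Rle_abs M); pose proof (Rle_abs (-M)); pose proof (Rle_abs a); pose proof (Rle_abs (-a));
  pose proof (Rle_abs b); pose proof (Rle_abs (-b)); rewrite !Rabs_Ropp in *.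
  assert (K := HM (- A) A ltac:(unfold A; lra) ltac:(unfold A; lra)).
  rewrite <- (RInt_ChaslesR f (- A) a A), <- (RInt_ChaslesR f a b A) in K by auto.
  assert (0 <= RInt f (- A) a) by (apply RInt_ge_0; auto; unfold A; lra).
  assert (0 <= RInt f b A) by (apply RInt_ge_0; auto; unfold A; lra).
  apply Rabs_def2 in K. lra.
Qed.

Lemma F1_pos p q : 0 < p -> 0 < F1 p q 1.
Proof.
  intros Hp.
  set (m := exp (-1) * p / (p ^ 2 + (1 + Rabs q) ^ 2)).
  assert (Hm : 0 < m).
  { unfold m. pose proof (exp_pos (-1)). pose proof (pow2_ge_0 (1 + Rabs q)). apply Rdiv_lt_0_compat; nra. }
  apply Rlt_le_trans with (RInt (f1 p q 1) (-1) 1).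
  - apply Rlt_le_trans with (RInt (fun _ => m) (-1) 1).
    + rewrite (RInt_const (V := R_CompleteNormedModule)). unfold scal; simpl; unfold mult; simpl. lra.
    + apply RInt_le. lra. apply ex_RInt_contR; intros; apply continuous_const.
      apply ex_RInt_contR; intros; apply f1_cont; lra.
      intros u Hu. unfold f1, Dn, m, gau.
      assert (E1 : exp (-1) <= exp (- u ^ 2)) by (apply exp_le_exp'; nra).
      assert (E2 : (u - 1 * q) ^ 2 <= (1 + Rabs q) ^ 2).
      { assert (Rabs (u - 1 * q) <= 1 + Rabs q).
        { replace (u - 1 * q) with (u + - q) by ring. eapply Rle_trans; [apply Rabs_triang|].
          rewrite Rabs_Ropp. apply Rplus_le_compat_r. apply Rabs_le; lra. }
        rewrite <- sq_abs. pose proof (Rabs_pos (u - 1 * q)). pose proof (Rabs_pos q). nra. }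
      pose proof (pow2_ge_0 (u - 1 * q)). pose proof (exp_pos (-1)).
      replace (1 * p) with p by ring.
      unfold Rdiv. rewrite Rmult_assoc, (Rmult_assoc (exp (- u ^ 2))).
      apply Rmult_le_compat; try nra.
      apply Rmult_le_pos. lra. left; apply Rinv_0_lt_compat; nra.
      apply Rmult_le_compat_l. lra. apply Rinv_le_contravar; nra.
  - apply II_ge_RInt. intros u. unfold f1. pose proof (Dn_pos p q 1 u Hp Rlt_0_1). pose proof (gau_pos u).
    apply Rdiv_le_0_compat; auto. nra. apply F1_II; lra. lra.
Qed.


Lemma Fc_final p q : 0 < p -> F1 p q 1 = PI * Re (erfcx (p, q)) /\ F2 p q 1 = PI * Im (erfcx (p, q)).
Proof.
  intros Hp. assert (K := Fc_1 p q Hp). rewrite cc_PI in K.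
  replace (PI - PI) with 0 in K by ring.
  split.
  - apply (f_equal fst) in K. unfold Fc in K. change (fst (F1 p q 1, F2 p q 1)) with (F1 p q 1) in K.
    rewrite K. unfold Re, RtoC. simpl. ring.
  - apply (f_equal snd) in K. unfold Fc in K. change (snd (F1 p q 1, F2 p q 1)) with (F2 p q 1) in K.
    rewrite K. unfold Im, RtoC. simpl. ring.
Qed.

Theorem mainTheorem5 (sigma0 sigmaeps theta0 x : R) :
  0 < sigma0 -> 0 < sigmaeps ->
  let x0 := (x - theta0) / sigma0 in
  let a := sigmaeps / sigma0 in
  let z : C := (a / sqrt 2, x0 / sqrt 2) in
  posterior_mean (normal_pdf theta0 sigma0) (cauchy_pdf 0 sigmaeps) x
  = x + sigmaeps * (Im (erfcx z) / Re (erfcx z)).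
Proof.
  intros Hs0 Hse x0 a z.
  set (s0 := sigma0) in *. set (se := sigmaeps) in *.
  assert (Hs2 : 0 < sqrt 2) by (apply sqrt_lt_R0; lra).
  assert (Hs22 : sqrt 2 * sqrt 2 = 2) by (apply sqrt_sqrt; lra).
  assert (Hpi : 0 < PI) by apply PI_RGT_0.
  assert (Hspi : 0 < sqrt (2 * PI)) by (apply sqrt_lt_R0; lra).
  set (p := a / sqrt 2). set (q := x0 / sqrt 2).
  assert (Hp : 0 < p) by (unfold p, a; apply Rdiv_lt_0_compat; auto; apply Rdiv_lt_0_compat; auto).
  set (be := sqrt 2 * s0).
  assert (Hbe : 0 < be) by (unfold be; nra).
  set (k0 := p / (s0 * sqrt (2 * PI) * (PI * se))).
  set (uu := fun th => - theta0 / be + / be * th).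
  assert (Huu : forall th, th - theta0 = be * uu th) by (intros; unfold uu; field; lra).
  assert (Hxq : x - theta0 = be * q) by (unfold be, q, x0; field; lra).
  assert (Hsep : se = be * p) by (unfold be, p, a; field; lra).
  assert (Hbe2 : be ^ 2 = 2 * s0 ^ 2).
  { unfold be. replace ((sqrt 2 * s0) ^ 2) with (sqrt 2 * sqrt 2 * s0 ^ 2) by ring. rewrite Hs22. ring. }
  assert (HD : forall th, normal_pdf theta0 s0 th * cauchy_pdf 0 se (x - th)
      = (k0 * be) * (/ be * f1 p q 1 (uu th))).
  { intros th. unfold normal_pdf, cauchy_pdf, f1, Dn, gau, k0.
    replace (- (th - theta0) ^ 2 / (2 * s0 ^ 2)) with (- uu th ^ 2).
    2:{ rewrite Huu. rewrite <- Hbe2. field. lra. }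
    replace (x - th - 0) with (be * (q - uu th)).
    2:{ replace (x - th - 0) with ((x - theta0) - (th - theta0)) by ring. rewrite Hxq, Huu. ring. }
    rewrite Hsep. pose proof (pow2_ge_0 (uu th - 1 * q)). pose proof (pow2_ge_0 (q - uu th)).
    pose proof (exp_pos (- uu th ^ 2)).
    field. repeat split; try lra; try nra. }
  assert (HN : forall th, th * normal_pdf theta0 s0 th * cauchy_pdf 0 se (x - th)
      = x * (normal_pdf theta0 s0 th * cauchy_pdf 0 se (x - th)) + (k0 * be * be * p) * (/ be * f2 p q 1 (uu th))).
  { intros th. rewrite Rmult_assoc, !HD.
    replace th with ((th - theta0) + theta0) at 1 by ring. rewrite Huu.

    unfold f1, f2, Dn. pose proof (pow2_ge_0 (uu th - 1 * q)).
    replace x with (theta0 + be * q) by lra. field. pose proof (pow2_ge_0 (uu th - q)). split; [nra|lra]. }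
  assert (IIf1 := II_affine (f1 p q 1) (F1 p q 1) (- theta0 / be) (/ be) ltac:(apply Rinv_0_lt_compat; lra) (F1_II p q 1 Hp Rlt_0_1)).
  assert (IIf2 := II_affine (f2 p q 1) (F2 p q 1) (- theta0 / be) (/ be) ltac:(apply Rinv_0_lt_compat; lra) (F2_II p q 1 Hp Rlt_0_1)).
  assert (IID : II (fun th => normal_pdf theta0 s0 th * cauchy_pdf 0 se (x - th)) (k0 * be * F1 p q 1)).
  { eapply II_ext. intros th; symmetry; apply HD. apply II_scal. exact IIf1. }
  assert (IIN : II (fun th => th * normal_pdf theta0 s0 th * cauchy_pdf 0 se (x - th))
                   (x * (k0 * be * F1 p q 1) + k0 * be * be * p * F2 p q 1)).
  { eapply II_ext. intros th; symmetry; apply HN. apply II_plus. apply II_scal; auto. apply II_scal. exact IIf2. }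
  unfold posterior_mean. rewrite (II_RInt_gen _ _ IIN), (II_RInt_gen _ _ IID).
  destruct (Fc_final p q Hp) as [E1 E2]. pose proof (F1_pos p q Hp) as HF.
  unfold z. fold p q. rewrite E1 in HF.
  assert (HRe : 0 < Re (erfcx (p, q))) by nra.
  rewrite E1, E2, Hsep. unfold k0.
  field. repeat split; try lra; try nra.
Qed.
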